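(* If $G$ is a $\{P_5,\overline{P_5},\text{bull}\}$-free graph, then at least one of the following holds: $|V(G)|\le 2$; $G$ is isomorphic to $C_5$; $G$ has a homogeneous set; $G$ or $\overline{G}$ is a half graph.
   Context: All graphs are finite and simple. $P_n$ is the path on $n$ vertices, $C_n$ the cycle of length $n$, $\overline{G}$ the complement. $G$ is $\mathcal F$-free if it has no induced subgraph isomorphic to a member of $\mathcal F$. The bull is the graph with vertex set $\{x_1,x_2,x_3,y,z\}$ and edge set $\{x_1x_2,x_2x_3,x_1x_3,x_1y,x_2z\}$. A vertex $b\notin X$ is mixed on $X$ if it has both a neighbor and a non-neighbor in $X$. A homogeneous set is a set $X\subseteq V(G)$ with $1<|X|<|V(G)|$ such that no vertex outside $X$ is mixed on $X$. For $k\ge1$, $O_k$ is the bipartite graph with vertex set $\{a_1,\dots,a_k,b_1,\dots,b_k\}$ in which the only edges are $a_ib_j$ for $i+j\ge k+1$; a half graph is a graph isomorphic to $O_k$ for some $k$. *)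

(* Defs.v *)
(* Simple graphs: a symmetric irreflexive relation on a finType. *)
From mathcomp Require Import all_boot.
Set Implicit Arguments. Unset Strict Implicit. Unset Printing Implicit Defensive.

Definition compl (T : finType) (e : rel T) : rel T :=
  fun x y => (x != y) && ~~ e x y.

Definition has_induced (H : finType) (eH : rel H) (T : finType) (e : rel T) : Prop :=
  exists f : H -> T, injective f /\ forall x y, e (f x) (f y) = eH x y.

Definition isomorphic (T : finType) (e : rel T) (H : finType) (eH : rel H) : Prop :=
  exists f : T -> H, bijective f /\ forall x y, eH (f x) (f y) = e x y.

Definition P5 : rel 'I_5 := fun i j => (i.+1 == j :> nat) || (j.+1 == i :> nat).

Definition C5 : rel 'I_5 := fun i j =>
  [|| P5 i j, (i == 0 :> nat) && (j == 4 :> nat) | (i == 4 :> nat) && (j == 0 :> nat)].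

(* bull: x1=0, x2=1, x3=2, y=3, z=4; edges x1x2, x2x3, x1x3, x1y, x2z *)
Definition bull_edge (i j : nat) : bool :=
  [|| (i == 0) && (j == 1), (i == 1) && (j == 2), (i == 0) && (j == 2),
      (i == 0) && (j == 3) | (i == 1) && (j == 4)].
Definition bull : rel 'I_5 := fun i j => bull_edge i j || bull_edge j i.

Definition mixed (T : finType) (e : rel T) (b : T) (X : {set T}) : bool :=
  [exists x in X, e b x] && [exists y in X, ~~ e b y].

Definition homogeneous (T : finType) (e : rel T) (X : {set T}) : bool :=
  (1 < #|X| < #|T|) && [forall b, (b \notin X) ==> ~~ mixed e b X].

Definition has_homogeneous_set (T : finType) (e : rel T) : Prop :=
  exists X : {set T}, homogeneous e X.

(* O_k : vertices inl i = a_(i+1), inr j = b_(j+1); a_i b_j edge iff i+j >= k+1 *)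
Definition half_rel (k : nat) : rel ('I_k + 'I_k)%type := fun u v =>
  match u, v with
  | inl i, inr j => k.+1 <= i.+1 + j.+1
  | inr j, inl i => k.+1 <= i.+1 + j.+1
  | _, _ => false
  end.

Definition is_half_graph (T : finType) (e : rel T) : Prop :=
  exists k, 0 < k /\ @isomorphic T e _ (@half_rel k).

(* Main.v *)
Require Import Defs.
From mathcomp Require Import all_boot zify.
From Stdlib Require Import Classical_Prop.
Set Implicit Arguments. Unset Strict Implicit. Unset Printing Implicit Defensive.

Definition twinfree {H : finType} (eH : rel H) : bool :=
  [forall x, forall y, (x != y) ==> (eH x y || [exists z, eH x z != eH y z])].
Ltac twtac_p1 := apply/forallP; case=> [[|[|[|[|[|?]]]]] ?] //; apply/forallP;
  case=> [[|[|[|[|[|?]]]]] ?] //; apply/implyP => /= _;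
  apply/existsP;
  first [ by exists (@Ordinal 5 0 isT) | by exists (@Ordinal 5 1 isT) | by exists (@Ordinal 5 2 isT)
        | by exists (@Ordinal 5 3 isT) | by exists (@Ordinal 5 4 isT) ].
Lemma twP5 : twinfree P5. Proof. twtac_p1. Qed.
Lemma twH : twinfree (compl P5). Proof. twtac_p1. Qed.
Lemma twB : twinfree bull. Proof. twtac_p1. Qed.
Lemma twC : twinfree C5. Proof. twtac_p1. Qed.

Section G.
Variables (T : finType) (e : rel T).
Hypothesis esym : symmetric e.
Hypothesis eirr : irreflexive e.

Lemma induced_of (H : finType) (eH : rel H) (f : H -> T) :
  (forall x y, e (f x) (f y) = eH x y) -> twinfree eH -> has_induced eH e.
Proof.
move=> Hf /forallP tw; exists f; split => //.
move=> x y fxy; apply/eqP; apply/negPn/negP => nxy.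
move: (tw x) => /forallP /(_ y) /implyP /(_ nxy) /orP [hxy | /existsP [z hz]].
- by move: hxy; rewrite -Hf fxy eirr.
- by move: hz; rewrite -!Hf fxy eqxx.
Qed.

Definition vec5 (v0 v1 v2 v3 v4 : T) (i : 'I_5) : T := nth v0 [:: v0; v1; v2; v3; v4] i.

Ltac fin25_p1 := move=> [[|[|[|[|[|?]]]]] ?] [[|[|[|[|[|?]]]]] ?] //=;
  rewrite ?eirr //;
  first [ done | (apply: negbTE; done) | (rewrite esym; done) | (rewrite esym; apply: negbTE; done) ].

Lemma P5w v0 v1 v2 v3 v4 :
  e v0 v1 -> e v1 v2 -> e v2 v3 -> e v3 v4 ->
  ~~ e v0 v2 -> ~~ e v0 v3 -> ~~ e v0 v4 -> ~~ e v1 v3 -> ~~ e v1 v4 -> ~~ e v2 v4 ->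
  has_induced P5 e.
Proof.
move=> *; apply: (@induced_of _ _ (vec5 v0 v1 v2 v3 v4)); last exact: twP5.
fin25_p1.
Qed.

Lemma Hw c0 c1 c2 c3 c4 :
  e c0 c1 -> e c1 c2 -> e c2 c3 -> e c3 c4 -> e c4 c0 -> e c0 c2 ->
  ~~ e c0 c3 -> ~~ e c1 c3 -> ~~ e c1 c4 -> ~~ e c2 c4 ->
  has_induced (compl P5) e.
Proof.
move=> *; apply: (@induced_of _ _ (vec5 c0 c3 c1 c4 c2)); last exact: twH.
rewrite /compl; fin25_p1.
Qed.

Lemma Bw t0 t1 t2 p0 p1 :
  e t0 t1 -> e t1 t2 -> e t0 t2 -> e t0 p0 -> e t1 p1 ->
  ~~ e t0 p1 -> ~~ e t1 p0 -> ~~ e t2 p0 -> ~~ e t2 p1 -> ~~ e p0 p1 ->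
  has_induced bull e.
Proof.
move=> *; apply: (@induced_of _ _ (vec5 t0 t1 t2 p0 p1)); last exact: twB.
rewrite /bull /bull_edge; fin25_p1.
Qed.

Lemma C5w c0 c1 c2 c3 c4 :
  e c0 c1 -> e c1 c2 -> e c2 c3 -> e c3 c4 -> e c4 c0 ->
  ~~ e c0 c2 -> ~~ e c0 c3 -> ~~ e c1 c3 -> ~~ e c1 c4 -> ~~ e c2 c4 ->
  has_induced C5 e.
Proof.
move=> *; apply: (@induced_of _ _ (vec5 c0 c1 c2 c3 c4)); last exact: twC.
rewrite /C5 /P5; fin25_p1.
Qed.
End G.

Section Emb.
Variables (T : finType) (e : rel T).
Hypothesis esym : symmetric e.
Hypothesis eirr : irreflexive e.
Hypothesis noP5 : ~ has_induced P5 e.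
Hypothesis noH : ~ has_induced (compl P5) e.
Hypothesis noB : ~ has_induced bull e.
Hypothesis noC : ~ has_induced C5 e.

Definition typ k (A C : nat -> T) (fa fc : nat -> bool) (x : T) :=
  (forall i, 0 < i <= k -> e x (A i) = fa i) /\ (forall i, 0 < i <= k -> e x (C i) = fc i).

Definition allowed k A C x :=
  typ k A C (fun _ => false) (fun _ => false) x \/
  typ k A C (fun _ => true) (fun _ => true) x \/
  (exists2 m, 0 < m <= k & typ k A C (fun _ => false) (fun i => i <= m) x) \/
  (exists2 m, 0 < m <= k & typ k A C (fun i => i == m) (fun i => i <= m) x) \/
  (exists2 m, 0 < m <= k & typ k A C (fun i => m <= i) (fun _ => false) x) \/
  (exists2 m, 0 < m <= k & typ k A C (fun i => m <= i) (fun i => i == m) x).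

Ltac rwall_p2 := repeat (match goal with
  | H : forall (i j : nat), _ -> _ -> @eq bool (e _ _) _ |- _ => progress rewrite H
  | H : forall (i : nat), _ -> @eq bool (e _ _) _ |- _ => progress rewrite H
  | H : @eq bool (e _ _) _ |- _ => progress rewrite H
  | H : is_true (e _ _) |- _ => progress rewrite H
  | H : is_true (~~ e _ _) |- _ => progress rewrite (negbTE H)
  end).
Ltac adj_p2 := first [ done
  | solve [ rwall_p2; rewrite /=; lia ]
  | solve [ rewrite esym; rwall_p2; rewrite /=; lia ] ].

Section LA.
Variables (k : nat) (A C : nat -> T).
Hypothesis eAC : forall i j, 0 < i <= k -> 0 < j <= k -> e (A i) (C j) = (j <= i).
Hypothesis eAA : forall i j, 0 < i <= k -> 0 < j <= k -> e (A i) (A j) = false.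
Hypothesis eCC : forall i j, 0 < i <= k -> 0 < j <= k -> e (C i) (C j) = false.
Hypothesis k2 : 1 < k.

Lemma L1 x : (forall i, 0 < i <= k -> e x (A i) = false) ->
  typ k A C (fun _ => false) (fun _ => false) x \/
  exists2 m, 0 < m <= k & typ k A C (fun _ => false) (fun i => i <= m) x.
Proof.
move=> xA.
have pre : forall q s, 0 < q -> q < s <= k -> e x (C s) -> e x (C q).
  move=> q s q0 qs xs; apply/negP => nq; apply: noP5.
  apply: (P5w esym eirr (v0 := x) (v1 := C s) (v2 := A k) (v3 := C q) (v4 := A q)); adj_p2.
case: (boolP [exists i : 'I_k.+1, (0 < i) && e x (C i)]) => [/existsP [[i ilt] /= /andP [i0 xi]] | none].
- right.
  have ex : exists n, (0 < n <= k) && e x (C n) by exists i; rewrite i0 xi /=; lia.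
  have bnd : forall n, (0 < n <= k) && e x (C n) -> n <= k by move=> n /andP [] /andP [].
  case: (ex_maxnP ex bnd) => m /andP [/andP [m0 mk] xm] mmax.
  exists m; first by rewrite m0.
  split => // j /andP [j0 jk] /=.
  case: (ltngtP j m) => [jm | mj | jm]; last by subst j; rewrite xm ?leqnn.
  + by rewrite (pre j m) // ?j0 ?jm ?mk; lia.
  + apply/negP => xj; have := mmax j; rewrite j0 jk xj /= => /(_ isT); lia.
- left; split => // j /andP [j0 jk]; apply/negP => xj; move/negP: none; apply.
  apply/existsP; exists (inord j); rewrite inordK ?j0 ?xj //; lia.
Qed.

Lemma L3 x p : 0 < p <= k -> e x (A k) = false -> e x (A p) ->
  typ k A C (fun i => i == p) (fun i => i <= p) x.
Proof.
move=> pr xAk xp.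
have c1 : forall r, 0 < r <= k -> e x (A r) -> forall q, 0 < q <= r -> e x (C q).
  move=> r rr xr q qr; apply/negP => nq.
  have rk : r < k.
  { case: (ltngtP r k) => // h; first lia. by move: xr; rewrite h xAk. }
  case: (boolP (e x (C k))) => xk.
  + apply: noC; apply: (C5w esym eirr (c0 := x) (c1 := A r) (c2 := C q) (c3 := A k) (c4 := C k)); adj_p2.
  + apply: noP5; apply: (P5w esym eirr (v0 := x) (v1 := A r) (v2 := C q) (v3 := A k) (v4 := C k)); adj_p2.
have c2 : forall r, 0 < r <= k -> e x (A r) -> forall s, r < s <= k -> e x (C s) = false.
  move=> r rr xr s sr; apply/negP => xs.
  have rk : r < k.
  { case: (ltngtP r k) => // h; first lia. by move: xr; rewrite h xAk. }
  have x1 := c1 r rr xr 1 ltac:(lia).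
  apply: noH; apply: (Hw esym eirr (c0 := x) (c1 := A r) (c2 := C 1) (c3 := A k) (c4 := C s)); adj_p2.
split => i ir /=.
- case: (eqVneq i p) => [->|ip]; first by rewrite xp.
  apply/negP => xi.
  case: (ltngtP i p) => [lt|gt|eq]; last by move: ip; rewrite eq eqxx.
  + by move: (c2 i ir xi p ltac:(lia)); rewrite (c1 p pr xp p) //; lia.
  + by move: (c2 p pr xp i ltac:(lia)); rewrite (c1 i ir xi i) //; lia.
- case: (leqP i p) => ip; first by rewrite (c1 p pr xp i) //; lia.
  by rewrite (c2 p pr xp i) //; lia.
Qed.

Lemma L5 x p s : e x (A k) -> e x (C 1) -> 0 < p < k -> ~~ e x (A p) -> 1 < s <= k -> ~~ e x (C s) -> False.
Proof.
move=> xk x1 pr np sr ns.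
case: (leqP s p) => sp.
- apply: noH; apply: (Hw esym eirr (c0 := A k) (c1 := x) (c2 := C 1) (c3 := A p) (c4 := C s)); adj_p2.
- apply: noB; apply: (Bw esym eirr (t0 := C 1) (t1 := A k) (t2 := x) (p0 := A p) (p1 := C s)); adj_p2.
Qed.

Lemma L6 x : (forall i, 0 < i <= k -> e x (A i)) -> e x (C 1) ->
  typ k A C (fun _ => true) (fun _ => true) x \/ typ k A C (fun _ => true) (fun i => i == 1) x.
Proof.
move=> xA x1.
have xA' : forall i, 0 < i <= k -> e x (A i) = true by move=> i /xA ->.
case: (boolP [exists s : 'I_k.+1, (1 < s) && e x (C s)]) => [/existsP [[s slt] /= /andP [s1 xs]] | none].
- left; split => // t tr; apply/negP => nt.
  case: (ltngtP t s) => [ts|st|eq]; last by move: nt; rewrite eq xs.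
  + apply: noH; apply: (Hw esym eirr (c0 := x) (c1 := C s) (c2 := A k) (c3 := C t) (c4 := A t)); adj_p2.
  + apply: noB; apply: (Bw esym eirr (t0 := A t) (t1 := x) (t2 := C s) (p0 := C t) (p1 := A 1)); adj_p2.
- right; split => // t tr /=.
  case: (eqVneq t 1) => [->|t1]; first by rewrite x1.
  apply/negP => xt; move/negP: none; apply; apply/existsP; exists (inord t).
  rewrite inordK ?xt ?andbT; lia.
Qed.
End LA.

Section Dual.
Variables (k : nat) (A C : nat -> T).
Hypothesis eAC : forall i j, 0 < i <= k -> 0 < j <= k -> e (A i) (C j) = (j <= i).
Hypothesis eAA : forall i j, 0 < i <= k -> 0 < j <= k -> e (A i) (A j) = false.
Hypothesis eCC : forall i j, 0 < i <= k -> 0 < j <= k -> e (C i) (C j) = false.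

Definition dA (i : nat) := C (k.+1 - i).
Definition dC (i : nat) := A (k.+1 - i).

Lemma dAC i j : 0 < i <= k -> 0 < j <= k -> e (dA i) (dC j) = (j <= i).
Proof. move=> ir jr; rewrite /dA /dC esym eAC; lia. Qed.
Lemma dAA i j : 0 < i <= k -> 0 < j <= k -> e (dA i) (dA j) = false.
Proof. move=> ir jr; rewrite /dA eCC //; lia. Qed.
Lemma dCC i j : 0 < i <= k -> 0 < j <= k -> e (dC i) (dC j) = false.
Proof. move=> ir jr; rewrite /dC eAA //; lia. Qed.

Lemma dtyp fa fc x : typ k dA dC fa fc x -> typ k A C (fun j => fc (k.+1 - j)) (fun j => fa (k.+1 - j)) x.
Proof.
move=> [xa xc]; split => j jr.
- by rewrite -xc /dC ?subKn //; lia.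
- by rewrite -xa /dA ?subKn //; lia.
Qed.
End Dual.

Lemma typ_ext k A C fa fc fa' fc' x :
  (forall i, 0 < i <= k -> fa i = fa' i) -> (forall i, 0 < i <= k -> fc i = fc' i) ->
  typ k A C fa fc x -> typ k A C fa' fc' x.
Proof. move=> ha hc [xa xc]; split => i ir; by rewrite -?ha -?hc ?xa ?xc. Qed.

Section LAmain.
Variables (k : nat) (A C : nat -> T).
Hypothesis eAC : forall i j, 0 < i <= k -> 0 < j <= k -> e (A i) (C j) = (j <= i).
Hypothesis eAA : forall i j, 0 < i <= k -> 0 < j <= k -> e (A i) (A j) = false.
Hypothesis eCC : forall i j, 0 < i <= k -> 0 < j <= k -> e (C i) (C j) = false.
Hypothesis k2 : 1 < k.

Let dAC' := dAC eAC.
Let dAA' := dAA eCC.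
Let dCC' := dCC eAA.

Lemma noneP (f : nat -> bool) :
  ~~ [exists i : 'I_k.+1, (0 < i) && f i] -> forall i, 0 < i <= k -> f i = false.
Proof.
move=> none i /andP [i0 ik]; apply/negP => fi; move/negP: none; apply; apply/existsP.
exists (inord i); rewrite inordK ?i0 ?fi //; lia.
Qed.

Lemma LA x : allowed k A C x.
Proof.
case: (boolP [exists i : 'I_k.+1, (0 < i) && e x (A i)]) => [/existsP [[p plt] /= /andP [p0 xp]] | noA].
2: { have xA := @noneP (fun i => e x (A i)) noA.
     case: (L1 eAC eAA eCC k2 xA) => [h | [m mr h]]; [left; exact: h | do 2 right; left; exists m => //]. }
case: (boolP [exists i : 'I_k.+1, (0 < i) && e x (C i)]) => [/existsP [[q qlt] /= /andP [q0 xq]] | noCn].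
2: { have xC := @noneP (fun i => e x (C i)) noCn.
     have xA' : forall i, 0 < i <= k -> e x (dA k C i) = false.
       by move=> i ir; rewrite /dA xC //; lia.
     case: (L1 dAC' dAA' dCC' k2 xA') => [h | [m mr h]].
     - by left; have := dtyp h.
     - do 4 right; left; exists (k.+1 - m); first lia.
       apply: typ_ext (dtyp h) => i ir //=; lia. }
case: (boolP (e x (A k))) => xAk.
2: { do 3 right; left; exists p; first lia.
     apply: (L3 eAC eAA eCC k2) => //; [lia | exact: negbTE]. }
case: (boolP (e x (C 1))) => x1.
2: { do 5 right; exists (k.+1 - (k.+1 - q)); first lia.
     have h := L3 dAC' dAA' dCC' k2 (x := x) (p := k.+1 - q) ltac:(lia).
     have h1 : e x (dA k C k) = false by rewrite /dA subSnn; exact: negbTE.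
     have h2 : e x (dA k C (k.+1 - q)) by rewrite /dA subKn //; lia.
     apply: typ_ext (dtyp (h h1 h2)) => i ir /=; lia. }
case: (boolP [forall s : 'I_k.+1, (0 < s) ==> e x (C s)]) => allC.
- have xA' : forall i, 0 < i <= k -> e x (dA k C i).
    move=> i ir; move/forallP: allC => /(_ (inord (k.+1 - i))) /implyP.
    rewrite /dA inordK; [apply; lia | lia].
  have x1' : e x (dC k A 1) by rewrite /dC subn1.
  case: (L6 dAC' dAA' dCC' k2 xA' x1') => h; first by right; left; have := dtyp h.
  do 3 right; left; exists k; first lia.
  apply: typ_ext (dtyp h) => i ir /=; lia.
- have [[s slt] /= ns] : exists s : 'I_k.+1, ~~ ((0 < s) ==> e x (C s)).
    by apply/existsP; rewrite -negb_forall.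
  rewrite negb_imply in ns; case/andP: ns => s0 ns.
  have s1 : 1 < s by case: (eqVneq s 1) => [e1|]; [move: ns; rewrite e1 x1 | lia].
  have xAll : forall i, 0 < i <= k -> e x (A i).
    move=> i ir; apply/negP => ni.
    case: (eqVneq i k) => ik; first by move: ni; rewrite ik xAk.
    by apply: (L5 eAC eAA eCC k2 (x := x) (p := i) (s := s)) => //; lia.
  case: (L6 eAC eAA eCC k2 xAll x1) => h; first by right; left.
  do 5 right; exists 1; first lia.
  apply: typ_ext h => i ir //=; lia.
Qed.
End LAmain.

End Emb.

Section Ins.
Variables (T : finType) (e : rel T).
Hypothesis esym : symmetric e.
Hypothesis eirr : irreflexive e.

Definition emb k (A C : nat -> T) :=
  [/\ forall i j, 0 < i <= k -> 0 < j <= k -> e (A i) (C j) = (j <= i),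
      forall i j, 0 < i <= k -> 0 < j <= k -> e (A i) (A j) = false &
      forall i j, 0 < i <= k -> 0 < j <= k -> e (C i) (C j) = false].

Definition embc k (A C : nat -> T) :=
  [/\ forall i j, 0 < i <= k -> 0 < j <= k -> e (A i) (C j) = ~~ (j <= i),
      forall i j, 0 < i <= k -> 0 < j <= k -> e (A i) (A j) = (i != j) &
      forall i j, 0 < i <= k -> 0 < j <= k -> e (C i) (C j) = (i != j)].

Variables (k : nat) (A C : nat -> T).
Hypothesis eAC : forall i j, 0 < i <= k -> 0 < j <= k -> e (A i) (C j) = (j <= i).
Hypothesis eAA : forall i j, 0 < i <= k -> 0 < j <= k -> e (A i) (A j) = false.
Hypothesis eCC : forall i j, 0 < i <= k -> 0 < j <= k -> e (C i) (C j) = false.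

Lemma ins q r x w : 0 < q <= k.+1 -> q <= r <= q.+1 -> r <= k.+1 ->
  (forall j, 0 < j <= k -> e x (C j) = (if j < r then j <= q else j.+1 <= q)) ->
  (forall i, 0 < i <= k -> e x (A i) = false) ->
  (forall i, 0 < i <= k -> e w (A i) = (if i < q then r <= i else r <= i.+1)) ->
  (forall j, 0 < j <= k -> e w (C j) = false) ->
  e x w = (r <= q) ->
  exists A' C', emb k.+1 A' C'.
Proof.
move=> qr qrr rr xC xA wA wC xw.
exists (fun i => if i < q then A i else if i == q then x else A i.-1).
exists (fun j => if j < r then C j else if j == r then w else C j.-1).
split => i j ir jr /=.
- case: (ltngtP i q) => hi; case: (ltngtP j r) => hj /=;
  first [ rewrite eAC; lia | rewrite xC; [case: ifP => ?|]; lia | rewrite xw; lia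
        | rewrite esym wA; [case: ifP => ?|]; lia ].
- case: (ltngtP i q) => hi; case: (ltngtP j q) => hj /=;
  first [ rewrite eAA; lia | rewrite xA; lia | rewrite esym xA; lia | by rewrite eirr ].
- case: (ltngtP i r) => hi; case: (ltngtP j r) => hj /=;
  first [ rewrite eCC; lia | rewrite wC; lia | rewrite esym wC; lia | by rewrite eirr ].
Qed.

Lemma co3 u1 u2 u3 v1 v2 v3 :
  ~~ e u1 v1 -> e u1 v2 -> e u1 v3 -> ~~ e u2 v1 -> ~~ e u2 v2 -> e u2 v3 ->
  ~~ e u3 v1 -> ~~ e u3 v2 -> ~~ e u3 v3 ->
  e u1 u2 -> e u1 u3 -> e u2 u3 -> e v1 v2 -> e v1 v3 -> e v2 v3 ->
  exists A' C', embc 3 A' C'.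
Proof.
move=> *.
exists (fun i => if i == 1 then u1 else if i == 2 then u2 else u3).
exists (fun i => if i == 1 then v1 else if i == 2 then v2 else v3).
split; move=> [|[|[|[|i]]]] [|[|[|[|j]]]] // _ _ /=; rewrite ?eirr //;
  first [ done | (apply: negbTE; done) | (rewrite esym; done) | (rewrite esym; apply: negbTE; done) ].
Qed.
End Ins.

Section LCsec.
Variables (T : finType) (e : rel T).
Hypothesis esym : symmetric e.
Hypothesis eirr : irreflexive e.
Hypothesis noP5 : ~ has_induced P5 e.
Hypothesis noH : ~ has_induced (compl P5) e.
Hypothesis noB : ~ has_induced bull e.
Hypothesis noC : ~ has_induced C5 e.

Ltac rwall_p4 := repeat (match goal with
  | H : forall (i j : nat), _ -> _ -> @eq bool (e _ _) _ |- _ => progress rewrite H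
  | H : forall (i : nat), _ -> @eq bool (e _ _) _ |- _ => progress rewrite H
  | H : @eq bool (e _ _) _ |- _ => progress rewrite H
  | H : is_true (e _ _) |- _ => progress rewrite H
  | H : is_true (~~ e _ _) |- _ => progress rewrite (negbTE H)
  end).
Ltac adj_p4 := first [ done
  | solve [ rwall_p4; rewrite /=; lia ]
  | solve [ rewrite esym; rwall_p4; rewrite /=; lia ] ].
Ltac insfin_p4 := move=> ? ?; rwall_p4; rewrite /=; try (case: ifP => ?); lia.

Variables (k : nat) (A C : nat -> T).
Hypothesis eAC : forall i j, 0 < i <= k -> 0 < j <= k -> e (A i) (C j) = (j <= i).
Hypothesis eAA : forall i j, 0 < i <= k -> 0 < j <= k -> e (A i) (A j) = false.
Hypothesis eCC : forall i j, 0 < i <= k -> 0 < j <= k -> e (C i) (C j) = false.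
Hypothesis k2 : 1 < k.

Lemma LC m x w : 0 < m <= k ->
  (forall i, 0 < i <= k -> e x (C i) = (i <= m)) ->
  (forall i, 0 < i <= k -> i != m -> e x (A i) = false) ->
  allowed e k A C w ->
  ~ ((forall i, 0 < i <= k -> i != m -> e w (A i) = false) /\
     (forall i, 0 < i <= k -> e w (C i) = (i <= m))) ->
  e x w = ~~ e w (A m) ->
  (exists A' C', emb e k.+1 A' C') \/ (k = 2 /\ exists A' C', embc e 3 A' C').
Proof.
move=> mr xC xA0 wall ncl xw.
case: (boolP (e x (A m))) => xam.
-
  have xA : forall i, 0 < i <= k -> e x (A i) = (i == m).
    by move=> i ir; case: (eqVneq i m) => [->|im]; [rewrite xam ?eqxx | rewrite xA0 // (negbTE im)].
  clear xA0.
  case: wall => [[wA wC]|[[wA wC]|[[p pr [wA wC]]|[[p pr [wA wC]]|[[p pr [wA wC]]|[p pr [wA wC]]]]]]].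
  +
    have : (m < k) \/ (m = k) by lia.
    case=> [H|H].
    * exfalso; apply: noP5; apply: (P5w esym eirr (v0 := (C k)) (v1 := (A k)) (v2 := (C 1)) (v3 := x) (v4 := w)); adj_p4.
    * exfalso; apply: noB; apply: (Bw esym eirr (t0 := (C 1)) (t1 := x) (t2 := (A m)) (p0 := (A 1)) (p1 := w)); adj_p4.
  +
    have : (m = 1) \/ (m > 1) by lia.
    case=> [H|H].
    * have [kk|kk] : k = 2 \/ 2 < k by lia.
      { right; split => //; apply: (co3 esym eirr (u1 := (C 1)) (u2 := (A 1)) (u3 := x) (v1 := (C 2)) (v2 := (A 2)) (v3 := w)); adj_p4. }
      exfalso; apply: noB; apply: (Bw esym eirr (t0 := (C 1)) (t1 := w) (t2 := (A (m + 1))) (p0 := x) (p1 := (C k))); adj_p4.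
    * exfalso; apply: noH; apply: (Hw esym eirr (c0 := (C 1)) (c1 := (A 1)) (c2 := w) (c3 := (C m)) (c4 := x)); adj_p4.
  +
    have : (p < m) \/ (p > m) \/ (p = m) by lia.
    case=> [H|[H|H]].
    * exfalso; apply: noB; apply: (Bw esym eirr (t0 := (C 1)) (t1 := x) (t2 := w) (p0 := (A 1)) (p1 := (C m))); adj_p4.
    * exfalso; apply: noH; apply: (Hw esym eirr (c0 := (C 1)) (c1 := x) (c2 := w) (c3 := (C (m + 1))) (c4 := (A k))); adj_p4.
    * exfalso; apply: ncl; split => [i ir im | i ir]; rwall_p4; rewrite /=; lia.
  +
    have : (p < m /\ p > 1) \/ (p < m /\ p = 1 /\ m < k) \/ (p < m /\ p = 1 /\ m = k) \/ (p= m + 1 /\ m > 1) \/ (p= m + 1 /\ m = 1) \/ (p > m + 1) \/ (p = m) by lia.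
    case=> [H|[H|[H|[H|[H|[H|H]]]]]].
    * exfalso; apply: noB; apply: (Bw esym eirr (t0 := (C 1)) (t1 := x) (t2 := w) (p0 := (A 1)) (p1 := (C m))); adj_p4.
    * exfalso; apply: noP5; apply: (P5w esym eirr (v0 := (A 1)) (v1 := w) (v2 := x) (v3 := (C m)) (v4 := (A k))); adj_p4.
    * have [kk|kk] : k = 2 \/ 2 < k by lia.
      { right; split => //; apply: (co3 esym eirr (u1 := (C 1)) (u2 := w) (u3 := (A 1)) (v1 := (C 2)) (v2 := (A 2)) (v3 := x)); adj_p4. }
      exfalso; apply: noP5; apply: (P5w esym eirr (v0 := (A 1)) (v1 := w) (v2 := x) (v3 := (C (m - 1))) (v4 := (A (m - 1)))); adj_p4.
    * exfalso; apply: noB; apply: (Bw esym eirr (t0 := (C 1)) (t1 := w) (t2 := x) (p0 := (A 1)) (p1 := (C (m + 1)))); adj_p4.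
    * have [kk|kk] : k = 2 \/ 2 < k by lia.
      { right; split => //; apply: (co3 esym eirr (u1 := (C 1)) (u2 := x) (u3 := (A 1)) (v1 := (C 2)) (v2 := (A 2)) (v3 := w)); adj_p4. }
      exfalso; apply: noP5; apply: (P5w esym eirr (v0 := (A 1)) (v1 := x) (v2 := w) (v3 := (C (m + 1))) (v4 := (A k))); adj_p4.
    * exfalso; apply: noH; apply: (Hw esym eirr (c0 := (C 1)) (c1 := x) (c2 := w) (c3 := (C (m + 1))) (c4 := (A (m + 1)))); adj_p4.
    * exfalso; apply: ncl; split => [i ir im | i ir]; rwall_p4; rewrite /=; lia.
  +
    have : (p < m) \/ (p = m /\ m > 1) \/ (p = m /\ m = 1) \/ (p > m) by lia.
    case=> [H|[H|[H|H]]].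
    * exfalso; apply: noH; apply: (Hw esym eirr (c0 := (C 1)) (c1 := x) (c2 := (A m)) (c3 := w) (c4 := (A (m - 1)))); adj_p4.
    * exfalso; apply: noB; apply: (Bw esym eirr (t0 := (C 1)) (t1 := (A m)) (t2 := x) (p0 := (A 1)) (p1 := w)); adj_p4.
    * exfalso; apply: noH; apply: (Hw esym eirr (c0 := (A 1)) (c1 := x) (c2 := (C 1)) (c3 := (A k)) (c4 := w)); adj_p4.
    * exfalso; apply: noH; apply: (Hw esym eirr (c0 := (C 1)) (c1 := (A m)) (c2 := x) (c3 := w) (c4 := (A k))); adj_p4.
  +
    have : (p < m /\ p > 1) \/ (p < m /\ p = 1 /\ m < k) \/ (p < m /\ p = 1 /\ m = k) \/ (p = m /\ m > 1) \/ (p = m /\ m = 1) \/ (p > m) by lia.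
    case=> [H|[H|[H|[H|[H|H]]]]].
    * exfalso; apply: noB; apply: (Bw esym eirr (t0 := (C 1)) (t1 := (A m)) (t2 := x) (p0 := (A 1)) (p1 := w)); adj_p4.
    * exfalso; apply: noP5; apply: (P5w esym eirr (v0 := (A 1)) (v1 := w) (v2 := (A k)) (v3 := (C m)) (v4 := x)); adj_p4.
    * have [kk|kk] : k = 2 \/ 2 < k by lia.
      { right; split => //; apply: (co3 esym eirr (u1 := (A 2)) (u2 := x) (u3 := (C 2)) (v1 := (A 1)) (v2 := w) (v3 := (C 1))); adj_p4. }
      exfalso; apply: noP5; apply: (P5w esym eirr (v0 := (A 1)) (v1 := w) (v2 := (A (m - 1))) (v3 := (C (m - 1))) (v4 := x)); adj_p4.
    * exfalso; apply: noB; apply: (Bw esym eirr (t0 := (C 1)) (t1 := (A m)) (t2 := x) (p0 := (A 1)) (p1 := w)); adj_p4.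
    * exfalso; apply: noP5; apply: (P5w esym eirr (v0 := (C k)) (v1 := (A k)) (v2 := w) (v3 := (A 1)) (v4 := x)); adj_p4.
    * exfalso; apply: noH; apply: (Hw esym eirr (c0 := (C 1)) (c1 := (A m)) (c2 := x) (c3 := w) (c4 := (A k))); adj_p4.
-
  have xA : forall i, 0 < i <= k -> e x (A i) = false.
    by move=> i ir; case: (eqVneq i m) => [->|im]; [exact: negbTE | rewrite xA0].
  clear xA0.
  case: wall => [[wA wC]|[[wA wC]|[[p pr [wA wC]]|[[p pr [wA wC]]|[[p pr [wA wC]]|[p pr [wA wC]]]]]]].
  +
    have : (m < k) \/ (m = k) by lia.
    case=> [H|H].
    * exfalso; apply: noP5; apply: (P5w esym eirr (v0 := (C k)) (v1 := (A k)) (v2 := (C 1)) (v3 := x) (v4 := w)); adj_p4.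
    * left; apply: (ins esym eirr eAC eAA eCC (q := k + 1) (r := k + 1) (x := x) (w := w)); [lia|lia|lia|insfin_p4|insfin_p4|insfin_p4|insfin_p4|rwall_p4; rewrite /=; lia].
  +
    have : (m < k) \/ (m = k) by lia.
    case=> [H|H].
    * exfalso; apply: noB; apply: (Bw esym eirr (t0 := (C 1)) (t1 := w) (t2 := (A 1)) (p0 := x) (p1 := (C k))); adj_p4.
    * exfalso; apply: noH; apply: (Hw esym eirr (c0 := (C 1)) (c1 := (A 1)) (c2 := w) (c3 := (C m)) (c4 := x)); adj_p4.
  +
    have : (p < m) \/ (p > m) \/ (p = m) by lia.
    case=> [H|[H|H]].
    * exfalso; apply: noB; apply: (Bw esym eirr (t0 := (C 1)) (t1 := x) (t2 := w) (p0 := (A 1)) (p1 := (C m))); adj_p4.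
    * exfalso; apply: noB; apply: (Bw esym eirr (t0 := (C 1)) (t1 := w) (t2 := x) (p0 := (A 1)) (p1 := (C (m + 1)))); adj_p4.
    * exfalso; apply: ncl; split => [i ir im | i ir]; rwall_p4; rewrite /=; lia.
  +
    have : (p < m) \/ (p > m) \/ (p = m) by lia.
    case=> [H|[H|H]].
    * exfalso; apply: noH; apply: (Hw esym eirr (c0 := (C 1)) (c1 := w) (c2 := x) (c3 := (C m)) (c4 := (A k))); adj_p4.
    * exfalso; apply: noB; apply: (Bw esym eirr (t0 := (C 1)) (t1 := w) (t2 := x) (p0 := (A 1)) (p1 := (C (m + 1)))); adj_p4.
    * exfalso; apply: ncl; split => [i ir im | i ir]; rwall_p4; rewrite /=; lia.
  +
    have : (p < m) \/ (p = m) \/ (p= m + 1) \/ (p > m + 1) by lia.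
    case=> [H|[H|[H|H]]].
    * exfalso; apply: noP5; apply: (P5w esym eirr (v0 := (C m)) (v1 := x) (v2 := (C 1)) (v3 := (A (m - 1))) (v4 := w)); adj_p4.
    * left; apply: (ins esym eirr eAC eAA eCC (q := m) (r := m + 1) (x := x) (w := w)); [lia|lia|lia|insfin_p4|insfin_p4|insfin_p4|insfin_p4|rwall_p4; rewrite /=; lia].
    * left; apply: (ins esym eirr eAC eAA eCC (q := m + 1) (r := m + 1) (x := x) (w := w)); [lia|lia|lia|insfin_p4|insfin_p4|insfin_p4|insfin_p4|rwall_p4; rewrite /=; lia].
    * exfalso; apply: noP5; apply: (P5w esym eirr (v0 := (C (m + 1))) (v1 := (A (m + 1))) (v2 := (C 1)) (v3 := x) (v4 := w)); adj_p4.
  +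
    have : (p < m) \/ (p = m /\ m < k) \/ (p = m /\ m = k) \/ (p > m) by lia.
    case=> [H|[H|[H|H]]].
    * exfalso; apply: noP5; apply: (P5w esym eirr (v0 := (A (m - 1))) (v1 := w) (v2 := (A k)) (v3 := (C m)) (v4 := x)); adj_p4.
    * exfalso; apply: noB; apply: (Bw esym eirr (t0 := (C m)) (t1 := (A (m + 1))) (t2 := w) (p0 := x) (p1 := (C (m + 1)))); adj_p4.
    * exfalso; apply: noH; apply: (Hw esym eirr (c0 := (A m)) (c1 := w) (c2 := (C m)) (c3 := x) (c4 := (C (m - 1)))); adj_p4.
    * exfalso; apply: noP5; apply: (P5w esym eirr (v0 := (A 1)) (v1 := (C 1)) (v2 := x) (v3 := w) (v4 := (C p))); adj_p4.
Qed.
End LCsec.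

Section Abs.
Variables (T : finType) (e : rel T).
Hypothesis esym : symmetric e.
Hypothesis eirr : irreflexive e.
Hypothesis prime : ~ has_homogeneous_set e.

Definition clone (Hs : {set T}) (y h : T) :=
  forall u, u \in Hs -> u != h -> e y u = e h u.

Definition cloneb (Hs : {set T}) (y h : T) :=
  [forall u in Hs, (u != h) ==> (e y u == e h u)].

Lemma cloneP Hs y h : reflect (clone Hs y h) (cloneb Hs y h).
Proof.
apply: (iffP forall_inP) => H u uH.
- by move=> uh; move: (H u uH) => /implyP /(_ uh) /eqP.
- by apply/implyP => uh; apply/eqP; apply: H.
Qed.

Lemma card_lt_T (X : {set T}) t : t \notin X -> #|X| < #|T|.
Proof.
move=> tX; rewrite -(cardsC X); have : 0 < #|~: X| by apply/card_gt0P; exists t; rewrite inE.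
lia.
Qed.

Lemma notmixed_or (X : {set T}) : 1 < #|X| -> forall t, t \notin X ->
  exists2 b, b \notin X & mixed e b X.
Proof.
move=> X2 t tX.
have : ~~ homogeneous e X by apply/negP => hX; apply: prime; exists X.
rewrite /homogeneous X2 (card_lt_T tX) /= negb_forall => /existsP [b].
by rewrite negb_imply negbK => /andP [bX mb]; exists b.
Qed.

Lemma absL (Hs : {set T}) :
  1 < #|Hs| -> (exists t, t \notin Hs) ->
  (forall y, y \notin Hs -> ~~ mixed e y Hs \/ exists2 h, h \in Hs & clone Hs y h) ->
  exists h x w, h \in Hs /\ x \notin Hs /\ w \notin Hs /\ clone Hs x h /\ ~ clone Hs w h /\ e w x != e w h.
Proof.
move=> H2 [t tH] cls.
have [y yH my] := notmixed_or H2 tH.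
case: (cls y yH) => [nmy|[h hH cyh]]; first by move: nmy; rewrite my.
pose M := h |: [set z | (z \notin Hs) && cloneb Hs z h].
have hM : h \in M by rewrite !inE eqxx.
have yM : y \in M by rewrite !inE yH /=; apply/orP; right; apply/cloneP.
have yh : y != h by apply/eqP => yh; move: yH; rewrite yh hH.
have M2 : 1 < #|M|.
  apply: (@leq_trans #|[set h; y]|); first by rewrite cards2 eq_sym yh.
  by apply: subset_leq_card; apply/subsetP => z; rewrite in_set2 => /orP [/eqP-> | /eqP->].
have [u uH uh] : exists2 u, u \in Hs & u != h.
  move: H2; rewrite (cardD1 h) hH add1n ltnS => /card_gt0P [u]; rewrite !inE => /andP [uh uH].
  by exists u.
have uM : u \notin M by rewrite !inE negb_or uh uH.
have [w wM mw] := notmixed_or M2 uM.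
move: mw => /andP [/exists_inP [a aM wa] /exists_inP [b bM wb]].
have cl : forall z, z \in M -> z != h -> z \notin Hs /\ clone Hs z h.
  move=> z; rewrite !inE => /orP [/eqP -> | /andP [zH /cloneP c]]; first by rewrite eqxx.
  by move=> _; split.
have wH : w \notin Hs.
  apply/negP => wH.
  have wh : w != h by apply/eqP => wh; move: wM; rewrite wh hM.
  have same : forall z, z \in M -> e w z = e w h.
    move=> z zM; case: (eqVneq z h) => [-> // | zh].
    by case: (cl z zM zh) => _ /(_ w wH wh); rewrite esym (esym w h).
  by move: wb; rewrite (same b bM) -(same a aM) wa.
have ncw : ~ clone Hs w h.
  by move=> /cloneP c; move: wM; rewrite !inE wH c orbT.
case: (boolP (e w h)) => wh.
- have bh : b != h by apply/eqP => bh; move: wb; rewrite bh wh.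
  case: (cl b bM bh) => bH cb.
  exists h, b, w; do 5 (split; first done); by rewrite (negbTE wb) wh.
- have ah : a != h by apply/eqP => ah; move: wa; rewrite ah (negbTE wh).
  case: (cl a aM ah) => aH ca.
  exists h, a, w; do 5 (split; first done); by rewrite wa (negbTE wh).
Qed.
End Abs.

Section Core.
Variables (T : finType) (e : rel T).
Hypothesis esym : symmetric e.
Hypothesis eirr : irreflexive e.
Hypothesis noP5 : ~ has_induced P5 e.
Hypothesis noH : ~ has_induced (compl P5) e.
Hypothesis noB : ~ has_induced bull e.
Hypothesis noC : ~ has_induced C5 e.
Hypothesis prime : ~ has_homogeneous_set e.

Section E.
Variables (k : nat) (A C : nat -> T).
Hypothesis eAC : forall i j, 0 < i <= k -> 0 < j <= k -> e (A i) (C j) = (j <= i).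
Hypothesis eAA : forall i j, 0 < i <= k -> 0 < j <= k -> e (A i) (A j) = false.
Hypothesis eCC : forall i j, 0 < i <= k -> 0 < j <= k -> e (C i) (C j) = false.
Hypothesis k2 : 1 < k.

Lemma neqAA i j : 0 < i <= k -> 0 < j <= k -> i != j -> A i != A j.
Proof.
move=> ir jr ij; apply/eqP => h.
case: (ltngtP i j) => [lt|gt|eq]; last by move: ij; rewrite eq eqxx.
- by move: (eAC jr jr); rewrite -h eAC //; lia.
- by move: (eAC ir ir); rewrite h eAC //; lia.
Qed.
Lemma neqCC i j : 0 < i <= k -> 0 < j <= k -> i != j -> C i != C j.
Proof.
move=> ir jr ij; apply/eqP => h.
case: (ltngtP i j) => [lt|gt|eq]; last by move: ij; rewrite eq eqxx.
- by move: (eAC ir ir); rewrite h eAC //; lia.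
- by move: (eAC jr jr); rewrite -h eAC //; lia.
Qed.
Lemma neqAC i j : 0 < i <= k -> 0 < j <= k -> A i != C j.
Proof.
move=> ir jr; apply/eqP => h.
have r1 : 0 < 1 <= k by lia.
by move: (eAC ir r1); rewrite h eCC //; lia.
Qed.

Lemma LCwrap (Hs : {set T}) m x w :
  (forall u, reflect (exists2 i, 0 < i <= k & (u = A i \/ u = C i)) (u \in Hs)) ->
  0 < m <= k -> clone e Hs x (A m) -> ~ clone e Hs w (A m) -> e w x != e w (A m) ->
  (exists A' C', emb e k.+1 A' C') \/ (k = 2 /\ exists A' C', embc e 3 A' C').
Proof.
move=> hsP mr cx ncw wx.
apply: (LC esym eirr noP5 noH noB eAC eAA eCC k2 mr (x := x) (w := w)).
- move=> i ir; rewrite cx; [by rewrite eAC // | by apply/hsP; exists i => //; right | by rewrite eq_sym neqAC].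
- move=> i ir im; rewrite cx; [by rewrite eAA // | by apply/hsP; exists i => //; left | by rewrite neqAA].
- exact: (LA esym eirr noP5 noH noB noC eAC eAA eCC k2 w).
- move=> [wA wC]; apply: ncw => u /hsP [i ir [->|->]] uh.
  + have im : i != m by apply/eqP => im; move: uh; rewrite im eqxx.
    by rewrite wA // eAA.
  + by rewrite wC // eAC.
- by rewrite esym; move: wx; case: (e w x); case: (e w (A m)).
Qed.
End E.

Definition Hset k (A C : nat -> T) : {set T} :=
  [set t | [exists i : 'I_k.+1, (0 < i) && ((t == A i) || (t == C i))]].

Lemma HsetP k A C u : reflect (exists2 i, 0 < i <= k & (u = A i \/ u = C i)) (u \in Hset k A C).
Proof.
apply: (iffP idP).
- rewrite inE => /existsP [[i ilt] /= /andP [i0 /orP [/eqP h|/eqP h]]]; exists i; try lia; by [left|right].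
- move=> [i ir h]; rewrite inE; apply/existsP; exists (inord i); rewrite inordK; last lia.
  by case: h => ->; rewrite eqxx ?orbT andbT; lia.
Qed.

Lemma core k A C : 1 < k -> emb e k A C -> ~ (exists A' C', emb e k.+1 A' C') ->
  ~ (k = 2 /\ exists A' C', embc e 3 A' C') -> forall t, t \in Hset k A C.
Proof.
move=> k2 [eAC eAA eCC] nmax nco t; apply/negPn/negP => tH.
have dAC' := dAC esym eAC; have dAA' := dAA eCC; have dCC' := dCC eAA.
have hsP := @HsetP k A C.
have hsP' : forall u, reflect (exists2 i, 0 < i <= k & (u = dA k C i \/ u = dC k A i)) (u \in Hset k A C).
  move=> u; apply: (iffP (hsP u)) => -[i ir h]; exists (k.+1 - i); try lia.
  - by rewrite /dA /dC subKn; [case: h; [right|left] | lia].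
  - by rewrite /dA /dC in h; case: h; [right|left].
have H2 : 1 < #|Hset k A C|.
  have r1 : 0 < 1 <= k by lia.
  apply: (@leq_trans #|[set A 1; C 1]|); first by rewrite cards2 (neqAC eAC eCC k2 r1 r1).
  apply: subset_leq_card; apply/subsetP => z; rewrite in_set2 => /orP [/eqP->|/eqP->];
    apply/hsP; exists 1 => //; by [left|right].
have cls : forall y, y \notin Hset k A C -> ~~ mixed e y (Hset k A C) \/
                 exists2 h, h \in Hset k A C & clone e (Hset k A C) y h.
  move=> y _.
  case: (LA esym eirr noP5 noH noB noC eAC eAA eCC k2 y) =>
    [[yA yC]|[[yA yC]|[[m mr [yA yC]]|[[m mr [yA yC]]|[[m mr [yA yC]]|[m mr [yA yC]]]]]]].
  + left; apply/negP => /andP [/exists_inP [u /hsP [i ir [->|->]]]]; by rewrite ?yA ?yC.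
  + left; apply/negP => /andP [_ /exists_inP [u /hsP [i ir [->|->]]]]; by rewrite ?yA ?yC.
  + right; exists (A m); first by apply/hsP; exists m => //; left.
    move=> u /hsP [i ir [->|->]] uh /=; rewrite ?yA ?yC ?eAA ?eAC //.
  + right; exists (A m); first by apply/hsP; exists m => //; left.
    move=> u /hsP [i ir [->|->]] uh /=; rewrite ?yA ?yC ?eAA ?eAC //.
    by apply/negbTE; apply: contraNneq uh => ->.
  + right; exists (C m); first by apply/hsP; exists m => //; right.
    move=> u /hsP [i ir [->|->]] uh /=; rewrite ?yA ?yC ?eCC ?(esym (C m)) ?eAC //.
  + right; exists (C m); first by apply/hsP; exists m => //; right.
    move=> u /hsP [i ir [->|->]] uh /=; rewrite ?yA ?yC ?eCC ?(esym (C m)) ?eAC //.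
    by apply/negbTE; apply: contraNneq uh => ->.
have [h [x [w [hH [xH [wH [cx [ncw wx]]]]]]]] := absL esym prime H2 (ex_intro _ t tH) cls.
move/hsP: hH => [m mr [hm|hm]]; subst h.
- case: (LCwrap eAC eAA eCC k2 hsP mr cx ncw wx) => //.
- have mr' : 0 < k.+1 - m <= k by lia.
  have hm : C m = dA k C (k.+1 - m) by rewrite /dA subKn //; lia.
  rewrite hm in cx ncw wx.
  case: (LCwrap dAC' dAA' dCC' k2 hsP' mr' cx ncw wx) => //.
Qed.
End Core.

Section Iso.
Variables (T : finType) (e : rel T).
Hypothesis esym : symmetric e.
Hypothesis eirr : irreflexive e.

Definition hmap k (A C : nat -> T) (u : 'I_k + 'I_k) : T :=
  match u with inl i => A i.+1 | inr j => C (k - j) end.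

Lemma hmap_adj k A C : emb e k A C -> forall u v : 'I_k + 'I_k, e (hmap A C u) (hmap A C v) = half_rel u v.
Proof.
move=> [eAC eAA eCC] [i|i] [j|j] /=; have := ltn_ord i; have := ltn_ord j => ij ii.
- by rewrite eAA //; lia.
- by rewrite eAC; lia.
- by rewrite esym eAC; lia.
- by rewrite eCC //; lia.
Qed.

Lemma hmap_inj k A C : 1 < k -> emb e k A C -> injective (@hmap k A C).
Proof.
move=> k2 [eAC eAA eCC] [i|i] [j|j] /= h; have := ltn_ord i; have := ltn_ord j => ij ii.
- case: (eqVneq i j) => [->//|ne]; exfalso; move: h; apply/eqP.
  by apply: (neqAA eAC k2); [lia|lia|rewrite eqSS].
- by move/eqP: h; rewrite (negbTE (neqAC eAC eCC k2 (i := i.+1) (j := k - j) ltac:(lia) ltac:(lia))).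
- by move/eqP: h; rewrite eq_sym (negbTE (neqAC eAC eCC k2 (i := j.+1) (j := k - i) ltac:(lia) ltac:(lia))).
- case: (eqVneq i j) => [->//|ne]; exfalso; move: h; apply/eqP.
  apply: (neqCC eAC k2); [lia|lia|]; move: ne; apply: contra => /eqP h; apply/eqP/val_inj => /=; lia.
Qed.

Lemma emb_card k A C : 1 < k -> emb e k A C -> k + k <= #|T|.
Proof.
move=> k2 he; have := leq_card _ (hmap_inj k2 he).
by rewrite card_sum card_ord.
Qed.

Lemma iso_half k A C : 1 < k -> emb e k A C -> (forall t, t \in Hset k A C) ->
  isomorphic e (@half_rel k).
Proof.
move=> k2 he cov.
have finj := hmap_inj k2 he.
have fbij : bijective (@hmap k A C).
  apply: (inj_card_bij finj); rewrite -(card_codom finj).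
  apply/subset_leq_card/subsetP => t _; apply/codomP.
  move/HsetP: (cov t) => [i ir [->|->]].
  + exists (inl (Ordinal (n := k) (m := i.-1) ltac:(lia))) => /=; congr A; lia.
  + exists (inr (Ordinal (n := k) (m := k - i) ltac:(lia))) => /=; congr C; lia.
case: fbij => g fg gf.
exists g; split; first by exists (@hmap k A C).
by move=> x y; rewrite -(hmap_adj he) !gf.
Qed.
End Iso.

Section Compl.
Variables (T : finType) (e : rel T).
Hypothesis esym : symmetric e.
Hypothesis eirr : irreflexive e.

Lemma compl_sym : symmetric (compl e).
Proof. by move=> x y; rewrite /compl eq_sym esym. Qed.
Lemma compl_irr : irreflexive (compl e).
Proof. by move=> x; rewrite /compl eqxx. Qed.
Lemma compl_compl x y : compl (compl e) x y = e x y.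
Proof.
rewrite /compl; case: (eqVneq x y) => [->|ne]; first by rewrite eirr.
by rewrite negbK.
Qed.

Lemma induced_ext (H : finType) (eH eH' : rel H) (e' : rel T) :
  (forall x y, eH x y = eH' x y) -> has_induced eH e' -> has_induced eH' e'.
Proof. by move=> E [f [fi fa]]; exists f; split => // x y; rewrite fa E. Qed.

Lemma induced_rel_ext (H : finType) (eH : rel H) (e' e'' : rel T) :
  (forall x y, e' x y = e'' x y) -> has_induced eH e' -> has_induced eH e''.
Proof. by move=> E [f [fi fa]]; exists f; split => // x y; rewrite -E fa. Qed.

Lemma induced_compl (H : finType) (eH : rel H) :
  irreflexive eH -> has_induced eH (compl e) -> has_induced (compl eH) e.
Proof.
move=> hirr [f [fi fa]]; exists f; split => // x y.
case: (eqVneq x y) => [->|ne]; first by rewrite eirr /compl eqxx.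
have fne : f x != f y by apply: contra ne => /eqP /fi ->.
by move: (fa x y); rewrite /compl fne ne /= => <-; rewrite negbK.
Qed.

Lemma induced_perm (H1 H2 : finType) (e1 : rel H1) (e2 : rel H2) (s : H2 -> H1) :
  injective s -> (forall i j, e1 (s i) (s j) = e2 i j) -> has_induced e1 e -> has_induced e2 e.
Proof.
move=> si sa [f [fi fa]]; exists (f \o s); split; first exact: inj_comp.
by move=> x y /=; rewrite fa sa.
Qed.

Definition sig5 (l : seq nat) (i : 'I_5) : 'I_5 := inord (nth 0 l i).

Lemma noP5c : ~ has_induced (compl P5) e -> ~ has_induced P5 (compl e).
Proof. move=> nH h; apply: nH; apply: induced_compl h; by case=> [[|[|[|[|[|?]]]]] ?]. Qed.

Lemma noHc : ~ has_induced P5 e -> ~ has_induced (compl P5) (compl e).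
Proof.
move=> nP h; apply: nP.
have h' := induced_compl (eH := compl P5) _ h.
apply: induced_ext (h' _); last by case=> [[|[|[|[|[|?]]]]] ?].
by case=> [[|[|[|[|[|?]]]]] ?] [[|[|[|[|[|?]]]]] ?].
Qed.

Definition sigB (i : 'I_5) : 'I_5 :=
  match val i with 0 => @Ordinal 5 3 isT | 1 => @Ordinal 5 4 isT | 2 => @Ordinal 5 2 isT
  | 3 => @Ordinal 5 1 isT | _ => @Ordinal 5 0 isT end.
Definition sigC (i : 'I_5) : 'I_5 :=
  match val i with 0 => @Ordinal 5 0 isT | 1 => @Ordinal 5 2 isT | 2 => @Ordinal 5 4 isT
  | 3 => @Ordinal 5 1 isT | _ => @Ordinal 5 3 isT end.

Definition sigBi (i : 'I_5) : 'I_5 :=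
  match val i with 0 => @Ordinal 5 4 isT | 1 => @Ordinal 5 3 isT | 2 => @Ordinal 5 2 isT
  | 3 => @Ordinal 5 0 isT | _ => @Ordinal 5 1 isT end.
Definition sigCi (i : 'I_5) : 'I_5 :=
  match val i with 0 => @Ordinal 5 0 isT | 1 => @Ordinal 5 3 isT | 2 => @Ordinal 5 1 isT
  | 3 => @Ordinal 5 4 isT | _ => @Ordinal 5 2 isT end.
Lemma sigBK : cancel sigB sigBi.
Proof. by case=> [[|[|[|[|[|?]]]]] ?] //; apply: val_inj. Qed.
Lemma sigCK : cancel sigC sigCi.
Proof. by case=> [[|[|[|[|[|?]]]]] ?] //; apply: val_inj. Qed.

Lemma noBc : ~ has_induced bull e -> ~ has_induced bull (compl e).
Proof.
move=> nB h; apply: nB.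
have h' := induced_compl (eH := bull) _ h.
apply: (induced_perm (s := sigB)) (h' _); last by case=> [[|[|[|[|[|?]]]]] ?].
- exact: can_inj sigBK.
- by case=> [[|[|[|[|[|?]]]]] ?] [[|[|[|[|[|?]]]]] ?].
Qed.

Lemma noCc : ~ has_induced C5 e -> ~ has_induced C5 (compl e).
Proof.
move=> nC h; apply: nC.
have h' := induced_compl (eH := C5) _ h.
apply: (induced_perm (s := sigC)) (h' _); last by case=> [[|[|[|[|[|?]]]]] ?].
- exact: can_inj sigCK.
- by case=> [[|[|[|[|[|?]]]]] ?] [[|[|[|[|[|?]]]]] ?].
Qed.

Lemma mixed_compl b (X : {set T}) : b \notin X -> mixed (compl e) b X = mixed e b X.
Proof.
move=> bX.
have E : forall y, y \in X -> compl e b y = ~~ e b y.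
  move=> y yX; rewrite /compl (_ : b != y) //; apply: contraNneq bX => ->; done.
rewrite /mixed andbC; congr andb.
- apply/exists_inP/exists_inP => -[y yX hy]; exists y => //; move: hy; by rewrite E // negbK.
- apply/exists_inP/exists_inP => -[y yX hy]; exists y => //; move: hy; by rewrite E.
Qed.

Lemma homog_compl (X : {set T}) : homogeneous (compl e) X = homogeneous e X.
Proof.
rewrite /homogeneous; congr andb; apply/forallP/forallP => H b; apply/implyP => bX;
  move/implyP: (H b) => /(_ bX); by rewrite mixed_compl.
Qed.

Lemma prime_compl : ~ has_homogeneous_set e -> ~ has_homogeneous_set (compl e).
Proof. by move=> np [X hX]; apply: np; exists X; rewrite -homog_compl. Qed.

Lemma emb_ext (e1 e2 : rel T) k A C : (forall u v, e1 u v = e2 u v) -> emb e1 k A C -> emb e2 k A C.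
Proof. by move=> E [h1 h2 h3]; split => i j ir jr; rewrite -E; auto. Qed.

Lemma embc_emb A C : embc e 3 A C -> emb (compl e) 3 A C.
Proof.
move=> [eAC eAA eCC].
have key : forall i j, 0 < i <= 3 -> 0 < j <= 3 -> j <= i -> A i != C j.
  move=> i j ir jr ji; apply/eqP => E.
  have h1 := eAA 1 i ltac:(lia) ir; have h2 := eAC 1 j ltac:(lia) jr.
  have h3 := eCC 1 j ltac:(lia) jr; have h4 := eAC i 1 ir ltac:(lia).
  have h5 := eAA 2 i ltac:(lia) ir; have h6 := eAC 2 j ltac:(lia) jr.
  rewrite E in h1 h4 h5; rewrite h2 in h1; rewrite esym h3 in h4; rewrite h6 in h5.
  lia.
split => i j ir jr; rewrite /compl.
- rewrite eAC // negbK; case: (leqP j i) => ji; last by rewrite andbF.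
  by rewrite key.
- rewrite eAA //; case: (eqVneq i j) => [->|ij]; by rewrite ?eqxx ?andbF.
- rewrite eCC //; case: (eqVneq i j) => [->|ij]; by rewrite ?eqxx ?andbF.
Qed.
End Compl.

Section Sein.
Variable (T : finType).

Definition P4free (e : rel T) (S : {set T}) := forall a b c d,
  a \in S -> b \in S -> c \in S -> d \in S ->
  e a b -> e b c -> e c d -> ~~ e a c -> ~~ e a d -> ~~ e b d -> False.

Definition splits (e : rel T) (S X : {set T}) :=
  [/\ X \subset S, X != set0, X != S &
     (forall x y, x \in X -> y \in S :\: X -> e x y) \/
     (forall x y, x \in X -> y \in S :\: X -> ~~ e x y)].

Lemma step_anti (e : rel T) (esym : symmetric e) (S' X' : {set T}) v :
  v \notin S' -> P4free e (v |: S') -> X' \subset S' -> X' != set0 -> X' != S' ->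
  (forall x y, x \in X' -> y \in S' :\: X' -> ~~ e x y) ->
  exists X, splits e (v |: S') X.
Proof.
move=> vS p4 XS X0 XnS anti.
have vX' : forall u, u \in X' -> u != v.
  by move=> u uX; apply: contraNneq vS => <-; apply: (subsetP XS).
have [y0 y0S y0X] : exists2 y, y \in S' & y \notin X'.
  have : X' \proper S' by rewrite properEneq XnS XS.
  by case/properP => _ [y yS yX]; exists y.
have [x0 x0X] : exists x, x \in X' by apply/set0Pn.
case: (boolP [forall x in X', ~~ e v x]) => [/forall_inP nA | hA].
  exists X'; split => //.
  - by apply: (subset_trans XS); apply/subsetP => u uS; rewrite in_setU1 uS orbT.
  - apply/eqP => E; have : v \in X' by rewrite E setU11.
    by move/vX'; rewrite eqxx.
  - right => x y xX; rewrite in_setD in_setU1 => /andP [yX /orP [/eqP ->|yS]].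
    + by rewrite esym nA.
    + by apply: anti => //; rewrite in_setD yX.
case: (boolP [forall y in S' :\: X', ~~ e v y]) => [/forall_inP nB | hB].
  exists (S' :\: X'); split => //.
  - by apply/subsetP => u; rewrite in_setD in_setU1 => /andP [_ ->]; rewrite orbT.
  - by apply/set0Pn; exists y0; rewrite in_setD y0S y0X.
  - apply/eqP => E; have : v \in S' :\: X' by rewrite E setU11.
    by rewrite in_setD (negbTE vS) andbF.
  - right => x y xY; rewrite !in_setD in_setU1 => /andP [yY /orP [/eqP ->|yS]].
    + by rewrite esym nB.
    + have yX : y \in X' by move: yY; rewrite yS andbT negbK.
      by rewrite esym; apply: anti.
case: (boolP [forall u in S', e v u]) => [/forall_inP cC | hC].
  exists [set v]; split.
  - by rewrite sub1set setU11.
  - by apply/set0Pn; exists v; rewrite inE.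
  - apply/eqP => E; have : x0 \in [set v] by rewrite E in_setU1 (subsetP XS) ?orbT.
    by rewrite inE (negbTE (vX' _ x0X)).
  - left => x y; rewrite inE => /eqP ->; rewrite in_setD in_setU1 inE => /andP [yv /orP [/eqP yv'|yS]].
    + by move: yv; rewrite yv' eqxx.
    + exact: cC.
move: hA hB hC; rewrite !negb_forall_in => /exists_inP [a aX va] /exists_inP [z zY vz] /exists_inP [y yS vy].
rewrite negbK in va; rewrite negbK in vz.
have key : forall (P Q : {set T}) z0, P \subset S' -> Q \subset S' ->
    (forall u, u \in S' -> (u \in P) || (u \in Q)) ->
    (forall p q, p \in P -> q \in Q -> ~~ e p q) -> y \in P -> z0 \in Q -> e v z0 ->
    exists X, splits e (v |: S') X.
  move=> P Q z0 PS QS cov PQ yP zQ vz0.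
  exists [set u in P | ~~ e v u]; split.
  - apply/subsetP => u; rewrite inE => /andP [uP _]; by rewrite in_setU1 (subsetP PS) ?orbT.
  - by apply/set0Pn; exists y; rewrite inE yP vy.
  - apply/eqP => E; have : v \in [set u in P | ~~ e v u] by rewrite E setU11.
    rewrite inE => /andP [vP _]; by move: vS; rewrite (subsetP PS).
  - right => u t; rewrite inE => /andP [uP nvu]; rewrite in_setD in_setU1 inE =>
      /andP [tX /orP [/eqP ->|tS]]; first by rewrite esym.
    case/orP: (cov t tS) => [tP|tQ]; last by apply: PQ.
    have vt : e v t by move: tX; rewrite tP /= negbK.
    apply/negP => ut.
    have zS : z0 \in S' by apply: (subsetP QS).
    have uS : u \in S' by apply: (subsetP PS).
    apply: (p4 z0 v t u); rewrite ?in_setU1 ?zS ?tS ?uS ?eqxx ?orbT //.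
    + by rewrite (esym z0 v).
    + by rewrite (esym t u).
    + by rewrite (esym z0 t); apply: PQ.
    + by rewrite (esym z0 u); apply: PQ.
have cov : forall u, u \in S' -> (u \in X') || (u \in S' :\: X').
  by move=> u uS; rewrite in_setD uS andbT orbN.
have anti' : forall p q, p \in S' :\: X' -> q \in X' -> ~~ e p q.
  by move=> p q pY qX; rewrite esym; apply: anti.
case: (boolP (y \in X')) => yX.
- apply: (key X' (S' :\: X') z) => //; first by apply/subsetP => u; rewrite in_setD => /andP [].
- apply: (key (S' :\: X') X' a) => //; first by apply/subsetP => u; rewrite in_setD => /andP [].
  + by move=> u uS; rewrite orbC cov.
  + by rewrite in_setD yX.
Qed.
End Sein.

Section Sein2.
Variables (T : finType) (e : rel T).
Hypothesis esym : symmetric e.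
Hypothesis eirr : irreflexive e.

Lemma P4free_compl S : P4free e S -> P4free (compl e) S.
Proof.
move=> p4 a b c d aS bS cS dS hab hbc hcd nac nad nbd.
have nc : forall u v, u != v -> ~~ compl e u v -> e u v.
  by move=> u v uv; rewrite /compl uv /= negbK.
have cs := compl_sym esym.
have ac : a != c by apply/eqP => E; move: nad; rewrite E hcd.
have ad : a != d by apply/eqP => E; move: nac; rewrite E cs hcd.
have bd : b != d by apply/eqP => E; move: nad; rewrite -E hab.
apply: (p4 c a d b) => //.
- by rewrite esym; apply: nc.
- exact: nc.
- by rewrite esym; apply: nc.
- by move: hcd => /andP [].
- by move: hbc; rewrite cs => /andP [].
- by move: hab => /andP [].
Qed.

Lemma seinsche n (S : {set T}) : #|S| = n.+2 -> P4free e S -> exists X, splits e S X.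
Proof.
elim: n S => [|n IH] S cS p4.
- have /cards2P [a [b [ab ES]]] : #|S| == 2 by rewrite cS.
  subst S; exists [set a]; split.
  + by rewrite sub1set in_set2 eqxx.
  + by apply/set0Pn; exists a; rewrite inE.
  + apply/eqP => E; have : b \in [set a] by rewrite E in_set2 eqxx orbT.
    by rewrite inE eq_sym (negbTE ab).
  + have yb : forall y, y \in [set a; b] :\: [set a] -> y = b.
      by move=> y; rewrite in_setD in_set2 inE => /andP [/negbTE -> /eqP].
    case: (boolP (e a b)) => hab; [left|right]; move=> x y; rewrite inE => /eqP -> /yb -> //.
- have [v vS] : exists v, v \in S by apply/set0Pn; rewrite -card_gt0 cS.
  have cS' : #|S :\ v| = n.+2 by move: (cardsD1 v S); rewrite vS cS add1n => -[].
  have p4' : P4free e (S :\ v).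
    move=> a b c d aS bS cS0 dS; apply: p4; by apply: (subsetP (subsetDl S [set v])).
  have vS' : v \notin S :\ v by rewrite setD11.
  have ES : S = v |: (S :\ v) by rewrite setD1K.
  have [X' [XS X0 XnS [comp|anti]]] := IH _ cS' p4'.
  + have p4c : P4free (compl e) (v |: (S :\ v)) by rewrite -ES; apply: P4free_compl.
    have antic : forall x y, x \in X' -> y \in (S :\ v) :\: X' -> ~~ compl e x y.
      by move=> x y xX yY; rewrite /compl negb_and negbK comp ?orbT.
    have [X [XS2 X02 XnS2 hX]] := step_anti (compl_sym esym) vS' p4c XS X0 XnS antic.
    rewrite -ES in XS2 XnS2 hX; exists X; split => //.
    case: hX => hX; [right|left] => x y xX yY.
    * by move: (hX x y xX yY) => /andP [].
    * have xy : x != y by apply: contraTneq yY => <-; rewrite in_setD xX.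
      by move: (hX x y xX yY); rewrite /compl xy /= negbK.
  + have p4S : P4free e (v |: (S :\ v)) by rewrite -ES.
    have [X hX] := step_anti esym vS' p4S XS X0 XnS anti.
    by exists X; rewrite ES.
Qed.

Hypothesis prime : ~ has_homogeneous_set e.

Lemma split_homog (X : {set T}) : 2 < #|T| -> splits e setT X -> False.
Proof.
move=> T3 [_ X0 XT hX].
have hom : forall Z : {set T}, 1 < #|Z| -> (exists t, t \notin Z) ->
   (forall b, b \notin Z -> (forall z, z \in Z -> e b z) \/ (forall z, z \in Z -> ~~ e b z)) -> False.
  move=> Z Z2 [t tZ] H; apply: prime; exists Z; rewrite /homogeneous Z2 (card_lt_T tZ) /=.
  apply/forallP => b; apply/implyP => bZ; apply/negP => /andP [/exists_inP [y yZ hy] /exists_inP [z zZ hz]].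
  by case: (H b bZ) => Hb; [rewrite Hb in hz | rewrite (negbTE (Hb y yZ)) in hy].
have [x xX] : exists x, x \in X by apply/set0Pn.
have [t tX] : exists t, t \notin X.
  apply/existsP; rewrite -negb_forall; apply: contra XT => /forallP H.
  by apply/eqP/setP => u; rewrite inE H.
have mem : forall b, b \notin X -> b \in setT :\: X by move=> b bX; rewrite in_setD bX in_setT.
case: (leqP 2 #|X|) => X2.
- apply: (hom X X2); first by exists t.
  move=> b bX; case: hX => hX; [left|right] => z zX; rewrite esym; exact: hX zX (mem b bX).
- have X1 : 0 < #|X| by apply/card_gt0P; exists x.
  have cX : #|X| = 1 by lia.
  apply: (hom (~: X)).
  + rewrite cardsCs setCK cX; lia.
  + by exists x; rewrite inE negbK.
  + move=> b; rewrite inE negbK => bX.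
    case: hX => hX; [left|right] => z; rewrite inE => zX; exact: hX bX (mem z zX).
Qed.

Lemma prime_P4 : 2 < #|T| -> exists a b c d, [/\ e a b, e b c, e c d & [/\ ~~ e a c, ~~ e a d & ~~ e b d]].
Proof.
move=> T3.
case: (boolP [exists a, exists b, exists c, exists d,
   [&& e a b, e b c, e c d & [&& ~~ e a c, ~~ e a d & ~~ e b d]]]).
- move=> /existsP [a /existsP [b /existsP [c /existsP [d /and4P [h1 h2 h3 /and3P [h4 h5 h6]]]]]].
  by exists a, b, c, d.
- move=> none; exfalso.
  have p4 : P4free e setT.
    move=> a b c d _ _ _ _ h1 h2 h3 h4 h5 h6; move/negP: none; apply.
    apply/existsP; exists a; apply/existsP; exists b; apply/existsP; exists c; apply/existsP; exists d.
    by rewrite h1 h2 h3 h4 h5 h6.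
  have cT : #|[set: T]| = (#|T| - 2).+2 by rewrite cardsT; lia.
  have [X hX] := seinsche cT p4.
  exact: split_homog T3 hX.
Qed.
End Sein2.

Definition allowedC (b0 b1 b2 b3 b4 : bool) : bool :=
  [|| [&& ~~ b0, ~~ b1, ~~ b2, ~~ b3 & ~~ b4], [&& b0, b1, b2, b3 & b4],
      [&& b1, ~~ b2, ~~ b3 & b4], [&& b2, ~~ b3, ~~ b4 & b0], [&& b3, ~~ b4, ~~ b0 & b1],
      [&& b4, ~~ b0, ~~ b1 & b2], [&& b0, ~~ b1, ~~ b2 & b3] |
   [|| [&& b0, b1, ~~ b2, ~~ b3 & b4], [&& b1, b2, ~~ b3, ~~ b4 & b0], [&& b2, b3, ~~ b4, ~~ b0 & b1],
       [&& b3, b4, ~~ b0, ~~ b1 & b2] | [&& b4, b0, ~~ b1, ~~ b2 & b3]]].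

Section C5sec.
Variables (T : finType) (e : rel T).
Hypothesis esym : symmetric e.
Hypothesis eirr : irreflexive e.
Hypothesis noP5 : ~ has_induced P5 e.
Hypothesis noH : ~ has_induced (compl P5) e.
Hypothesis noB : ~ has_induced bull e.

Ltac rwall_p9 := repeat (match goal with
  | H : @eq bool (e _ _) _ |- _ => progress rewrite H
  | H : is_true (e _ _) |- _ => progress rewrite H
  | H : is_true (~~ e _ _) |- _ => progress rewrite (negbTE H)
  end).
Ltac adjc_p9 := first [ done | by rwall_p9 | by rewrite esym; rwall_p9 ].

Variables (u0 u1 u2 u3 u4 : T).
Hypotheses (c01 : e u0 u1) (c12 : e u1 u2) (c23 : e u2 u3) (c34 : e u3 u4) (c40 : e u4 u0).
Hypotheses (n02 : ~~ e u0 u2) (n03 : ~~ e u0 u3) (n13 : ~~ e u1 u3) (n14 : ~~ e u1 u4) (n24 : ~~ e u2 u4).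

Lemma C5A x : allowedC (e x u0) (e x u1) (e x u2) (e x u3) (e x u4).
Proof.
case h0 : (e x u0).
- case h1 : (e x u1).
  + case h2 : (e x u2).
    * case h3 : (e x u3).
      -- case h4 : (e x u4).
        ++ by rewrite /allowedC /=.
        ++ exfalso; apply: noH; apply: (Hw esym eirr (c0 := u0) (c1 := u1) (c2 := x) (c3 := u3) (c4 := u4)); adjc_p9.
      -- case h4 : (e x u4).
        ++ exfalso; apply: noH; apply: (Hw esym eirr (c0 := u4) (c1 := u0) (c2 := x) (c3 := u2) (c4 := u3)); adjc_p9.
        ++ by rewrite /allowedC /=.
    * case h3 : (e x u3).
      -- case h4 : (e x u4).
        ++ exfalso; apply: noH; apply: (Hw esym eirr (c0 := u1) (c1 := u0) (c2 := x) (c3 := u3) (c4 := u2)); adjc_p9.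
        ++ exfalso; apply: noH; apply: (Hw esym eirr (c0 := u1) (c1 := u0) (c2 := x) (c3 := u3) (c4 := u2)); adjc_p9.
      -- case h4 : (e x u4).
        ++ by rewrite /allowedC /=.
        ++ exfalso; apply: noB; apply: (Bw esym eirr (t0 := u0) (t1 := u1) (t2 := x) (p0 := u4) (p1 := u2)); adjc_p9.
  + case h2 : (e x u2).
    * case h3 : (e x u3).
      -- case h4 : (e x u4).
        ++ exfalso; apply: noH; apply: (Hw esym eirr (c0 := u2) (c1 := u3) (c2 := x) (c3 := u0) (c4 := u1)); adjc_p9.
        ++ exfalso; apply: noH; apply: (Hw esym eirr (c0 := u2) (c1 := u3) (c2 := x) (c3 := u0) (c4 := u1)); adjc_p9.
      -- case h4 : (e x u4).
        ++ exfalso; apply: noH; apply: (Hw esym eirr (c0 := u0) (c1 := u4) (c2 := x) (c3 := u2) (c4 := u1)); adjc_p9.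
        ++ by rewrite /allowedC /=.
    * case h3 : (e x u3).
      -- case h4 : (e x u4).
        ++ by rewrite /allowedC /=.
        ++ by rewrite /allowedC /=.
      -- case h4 : (e x u4).
        ++ exfalso; apply: noP5; apply: (P5w esym eirr (v0 := u3) (v1 := u2) (v2 := u1) (v3 := u0) (v4 := x)); adjc_p9.
        ++ exfalso; apply: noP5; apply: (P5w esym eirr (v0 := u3) (v1 := u2) (v2 := u1) (v3 := u0) (v4 := x)); adjc_p9.
- case h1 : (e x u1).
  + case h2 : (e x u2).
    * case h3 : (e x u3).
      -- case h4 : (e x u4).
        ++ exfalso; apply: noH; apply: (Hw esym eirr (c0 := u1) (c1 := u2) (c2 := x) (c3 := u4) (c4 := u0)); adjc_p9.
        ++ by rewrite /allowedC /=.
      -- case h4 : (e x u4).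
        ++ exfalso; apply: noB; apply: (Bw esym eirr (t0 := u1) (t1 := u2) (t2 := x) (p0 := u0) (p1 := u3)); adjc_p9.
        ++ exfalso; apply: noB; apply: (Bw esym eirr (t0 := u1) (t1 := u2) (t2 := x) (p0 := u0) (p1 := u3)); adjc_p9.
    * case h3 : (e x u3).
      -- case h4 : (e x u4).
        ++ exfalso; apply: noH; apply: (Hw esym eirr (c0 := u4) (c1 := u3) (c2 := x) (c3 := u1) (c4 := u0)); adjc_p9.
        ++ by rewrite /allowedC /=.
      -- case h4 : (e x u4).
        ++ by rewrite /allowedC /=.
        ++ exfalso; apply: noP5; apply: (P5w esym eirr (v0 := u3) (v1 := u4) (v2 := u0) (v3 := u1) (v4 := x)); adjc_p9.
  + case h2 : (e x u2).
    * case h3 : (e x u3).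
      -- case h4 : (e x u4).
        ++ by rewrite /allowedC /=.
        ++ exfalso; apply: noP5; apply: (P5w esym eirr (v0 := u4) (v1 := u0) (v2 := u1) (v3 := u2) (v4 := x)); adjc_p9.
      -- case h4 : (e x u4).
        ++ by rewrite /allowedC /=.
        ++ exfalso; apply: noP5; apply: (P5w esym eirr (v0 := u4) (v1 := u0) (v2 := u1) (v3 := u2) (v4 := x)); adjc_p9.
    * case h3 : (e x u3).
      -- case h4 : (e x u4).
        ++ exfalso; apply: noP5; apply: (P5w esym eirr (v0 := u0) (v1 := u1) (v2 := u2) (v3 := u3) (v4 := x)); adjc_p9.
        ++ exfalso; apply: noP5; apply: (P5w esym eirr (v0 := u0) (v1 := u1) (v2 := u2) (v3 := u3) (v4 := x)); adjc_p9.
      -- case h4 : (e x u4).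
        ++ exfalso; apply: noP5; apply: (P5w esym eirr (v0 := u2) (v1 := u1) (v2 := u0) (v3 := u4) (v4 := x)); adjc_p9.
        ++ by rewrite /allowedC /=.
Qed.

Lemma C5C x w : e x u1 -> e x u4 -> ~~ e x u2 -> ~~ e x u3 ->
  allowedC (e w u0) (e w u1) (e w u2) (e w u3) (e w u4) ->
  ~~ [&& e w u1, ~~ e w u2, ~~ e w u3 & e w u4] ->
  e x w = ~~ e w u0 -> False.
Proof.
move=> x1 x4 x2 x3.
case h0 : (e x u0).
- case h1 : (e w u0).
  + case h2 : (e w u1).
    * case h3 : (e w u2).
      -- case h4 : (e w u3).
        ++ case h5 : (e w u4).
          ** move=> _ _ xw; exfalso; apply: noH; apply: (Hw esym eirr (c0 := u1) (c1 := u2) (c2 := w) (c3 := u4) (c4 := x)); adjc_p9.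
          ** by rewrite /allowedC /=.
        ++ case h5 : (e w u4).
          ** by rewrite /allowedC /=.
          ** move=> _ _ xw; exfalso; apply: noP5; apply: (P5w esym eirr (v0 := u3) (v1 := u2) (v2 := w) (v3 := u0) (v4 := x)); adjc_p9.
      -- case h4 : (e w u3).
        ++ case h5 : (e w u4).
          ** by rewrite /allowedC /=.
          ** by rewrite /allowedC /=.
        ++ case h5 : (e w u4).
          ** by rewrite /allowedC /=.
          ** by rewrite /allowedC /=.
    * case h3 : (e w u2).
      -- case h4 : (e w u3).
        ++ case h5 : (e w u4).
          ** by rewrite /allowedC /=.
          ** by rewrite /allowedC /=.
        ++ case h5 : (e w u4).
          ** by rewrite /allowedC /=.
          ** move=> _ _ xw; exfalso; apply: noH; apply: (Hw esym eirr (c0 := u0) (c1 := x) (c2 := u1) (c3 := u2) (c4 := w)); adjc_p9.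
      -- case h4 : (e w u3).
        ++ case h5 : (e w u4).
          ** move=> _ _ xw; exfalso; apply: noB; apply: (Bw esym eirr (t0 := u0) (t1 := u1) (t2 := x) (p0 := w) (p1 := u2)); adjc_p9.
          ** move=> _ _ xw; exfalso; apply: noB; apply: (Bw esym eirr (t0 := u0) (t1 := u1) (t2 := x) (p0 := w) (p1 := u2)); adjc_p9.
        ++ case h5 : (e w u4).
          ** by rewrite /allowedC /=.
          ** by rewrite /allowedC /=.
  + case h2 : (e w u1).
    * case h3 : (e w u2).
      -- case h4 : (e w u3).
        ++ case h5 : (e w u4).
          ** by rewrite /allowedC /=.
          ** move=> _ _ xw; exfalso; apply: noH; apply: (Hw esym eirr (c0 := u4) (c1 := u0) (c2 := x) (c3 := w) (c4 := u3)); adjc_p9.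
        ++ case h5 : (e w u4).
          ** by rewrite /allowedC /=.
          ** by rewrite /allowedC /=.
      -- case h4 : (e w u3).
        ++ case h5 : (e w u4).
          ** by rewrite /allowedC /=.
          ** move=> _ _ xw; exfalso; apply: noP5; apply: (P5w esym eirr (v0 := u0) (v1 := x) (v2 := w) (v3 := u3) (v4 := u2)); adjc_p9.
        ++ case h5 : (e w u4).
          ** by rewrite /allowedC /=.
          ** by rewrite /allowedC /=.
    * case h3 : (e w u2).
      -- case h4 : (e w u3).
        ++ case h5 : (e w u4).
          ** move=> _ _ xw; exfalso; apply: noH; apply: (Hw esym eirr (c0 := u1) (c1 := u0) (c2 := x) (c3 := w) (c4 := u2)); adjc_p9.
          ** by rewrite /allowedC /=.
        ++ case h5 : (e w u4).
          ** move=> _ _ xw; exfalso; apply: noH; apply: (Hw esym eirr (c0 := u1) (c1 := u0) (c2 := x) (c3 := w) (c4 := u2)); adjc_p9.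
          ** by rewrite /allowedC /=.
      -- case h4 : (e w u3).
        ++ case h5 : (e w u4).
          ** by rewrite /allowedC /=.
          ** by rewrite /allowedC /=.
        ++ case h5 : (e w u4).
          ** by rewrite /allowedC /=.
          ** move=> _ _ xw; exfalso; apply: noB; apply: (Bw esym eirr (t0 := u1) (t1 := x) (t2 := u0) (p0 := u2) (p1 := w)); adjc_p9.
- case h1 : (e w u0).
  + case h2 : (e w u1).
    * case h3 : (e w u2).
      -- case h4 : (e w u3).
        ++ case h5 : (e w u4).
          ** move=> _ _ xw; exfalso; apply: noB; apply: (Bw esym eirr (t0 := u1) (t1 := w) (t2 := u0) (p0 := x) (p1 := u3)); adjc_p9.
          ** by rewrite /allowedC /=.
        ++ case h5 : (e w u4).
          ** by rewrite /allowedC /=.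
          ** move=> _ _ xw; exfalso; apply: noH; apply: (Hw esym eirr (c0 := u0) (c1 := w) (c2 := u1) (c3 := x) (c4 := u4)); adjc_p9.
      -- case h4 : (e w u3).
        ++ case h5 : (e w u4).
          ** by rewrite /allowedC /=.
          ** by rewrite /allowedC /=.
        ++ case h5 : (e w u4).
          ** by rewrite /allowedC /=.
          ** by rewrite /allowedC /=.
    * case h3 : (e w u2).
      -- case h4 : (e w u3).
        ++ case h5 : (e w u4).
          ** by rewrite /allowedC /=.
          ** by rewrite /allowedC /=.
        ++ case h5 : (e w u4).
          ** by rewrite /allowedC /=.
          ** move=> _ _ xw; exfalso; apply: noP5; apply: (P5w esym eirr (v0 := u2) (v1 := w) (v2 := u0) (v3 := u4) (v4 := x)); adjc_p9.
      -- case h4 : (e w u3).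
        ++ case h5 : (e w u4).
          ** move=> _ _ xw; exfalso; apply: noP5; apply: (P5w esym eirr (v0 := u3) (v1 := w) (v2 := u0) (v3 := u1) (v4 := x)); adjc_p9.
          ** move=> _ _ xw; exfalso; apply: noP5; apply: (P5w esym eirr (v0 := u3) (v1 := w) (v2 := u0) (v3 := u1) (v4 := x)); adjc_p9.
        ++ case h5 : (e w u4).
          ** by rewrite /allowedC /=.
          ** by rewrite /allowedC /=.
  + case h2 : (e w u1).
    * case h3 : (e w u2).
      -- case h4 : (e w u3).
        ++ case h5 : (e w u4).
          ** by rewrite /allowedC /=.
          ** move=> _ _ xw; exfalso; apply: noB; apply: (Bw esym eirr (t0 := u1) (t1 := w) (t2 := x) (p0 := u0) (p1 := u3)); adjc_p9.
        ++ case h5 : (e w u4).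
          ** by rewrite /allowedC /=.
          ** by rewrite /allowedC /=.
      -- case h4 : (e w u3).
        ++ case h5 : (e w u4).
          ** by rewrite /allowedC /=.
          ** move=> _ _ xw; exfalso; apply: noB; apply: (Bw esym eirr (t0 := u1) (t1 := w) (t2 := x) (p0 := u0) (p1 := u3)); adjc_p9.
        ++ case h5 : (e w u4).
          ** by rewrite /allowedC /=.
          ** by rewrite /allowedC /=.
    * case h3 : (e w u2).
      -- case h4 : (e w u3).
        ++ case h5 : (e w u4).
          ** move=> _ _ xw; exfalso; apply: noP5; apply: (P5w esym eirr (v0 := u0) (v1 := u1) (v2 := x) (v3 := w) (v4 := u3)); adjc_p9.
          ** by rewrite /allowedC /=.
        ++ case h5 : (e w u4).
          ** move=> _ _ xw; exfalso; apply: noH; apply: (Hw esym eirr (c0 := u4) (c1 := w) (c2 := x) (c3 := u1) (c4 := u0)); adjc_p9.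
          ** by rewrite /allowedC /=.
      -- case h4 : (e w u3).
        ++ case h5 : (e w u4).
          ** by rewrite /allowedC /=.
          ** by rewrite /allowedC /=.
        ++ case h5 : (e w u4).
          ** by rewrite /allowedC /=.
          ** move=> _ _ xw; exfalso; apply: noP5; apply: (P5w esym eirr (v0 := u3) (v1 := u2) (v2 := u1) (v3 := x) (v4 := w)); adjc_p9.
Qed.
End C5sec.

Section C5main.
Variables (T : finType) (e : rel T).
Hypothesis esym : symmetric e.
Hypothesis eirr : irreflexive e.
Hypothesis noP5 : ~ has_induced P5 e.
Hypothesis noH : ~ has_induced (compl P5) e.
Hypothesis noB : ~ has_induced bull e.
Hypothesis prime : ~ has_homogeneous_set e.

Ltac rwall_p10 := repeat (match goal with
  | H : @eq bool (e _ _) _ |- _ => progress rewrite H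
  | H : is_true (e _ _) |- _ => progress rewrite H
  | H : is_true (~~ e _ _) |- _ => progress rewrite (negbTE H)
  end).

Section Cyc.
Variables (u0 u1 u2 u3 u4 : T).
Hypotheses (c01 : e u0 u1) (c12 : e u1 u2) (c23 : e u2 u3) (c34 : e u3 u4) (c40 : e u4 u0).
Hypotheses (n02 : ~~ e u0 u2) (n03 : ~~ e u0 u3) (n13 : ~~ e u1 u3) (n14 : ~~ e u1 u4) (n24 : ~~ e u2 u4).

Definition Hc := [set u0; u1; u2; u3; u4].

Lemma C5cls y : ~~ mixed e y Hc \/ exists2 h, h \in Hc & clone e Hc y h.
Proof.
have := C5A esym eirr noP5 noH noB c01 c12 c23 c34 c40 n02 n03 n13 n14 n24 y.
rewrite /Hc.
case h0 : (e y u0).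
- case h1 : (e y u1).
  + case h2 : (e y u2).
    * case h3 : (e y u3).
      -- case h4 : (e y u4).
        ++ move=> _; left; apply/negP => /andP [_ /exists_inP [u uH hu]]; move: uH hu; rewrite !inE => /orP [/orP [/orP [/orP [/eqP -> | /eqP ->] | /eqP ->] | /eqP ->] | /eqP ->]; by rewrite ?h0 ?h1 ?h2 ?h3 ?h4.
        ++ by rewrite /allowedC /=.
      -- case h4 : (e y u4).
        ++ by rewrite /allowedC /=.
        ++ move=> _; right; exists u1; first by rewrite !inE eqxx ?orbT.
          move=> u; rewrite !inE => /orP [/orP [/orP [/orP [/eqP -> | /eqP ->] | /eqP ->] | /eqP ->] | /eqP ->] hu; first [by rewrite eqxx in hu | by rwall_p10 | by rewrite [X in _ = X]esym; rwall_p10].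
    * case h3 : (e y u3).
      -- case h4 : (e y u4).
        ++ by rewrite /allowedC /=.
        ++ by rewrite /allowedC /=.
      -- case h4 : (e y u4).
        ++ move=> _; right; exists u0; first by rewrite !inE eqxx ?orbT.
          move=> u; rewrite !inE => /orP [/orP [/orP [/orP [/eqP -> | /eqP ->] | /eqP ->] | /eqP ->] | /eqP ->] hu; first [by rewrite eqxx in hu | by rwall_p10 | by rewrite [X in _ = X]esym; rwall_p10].
        ++ by rewrite /allowedC /=.
  + case h2 : (e y u2).
    * case h3 : (e y u3).
      -- case h4 : (e y u4).
        ++ by rewrite /allowedC /=.
        ++ by rewrite /allowedC /=.
      -- case h4 : (e y u4).
        ++ by rewrite /allowedC /=.
        ++ move=> _; right; exists u1; first by rewrite !inE eqxx ?orbT.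
          move=> u; rewrite !inE => /orP [/orP [/orP [/orP [/eqP -> | /eqP ->] | /eqP ->] | /eqP ->] | /eqP ->] hu; first [by rewrite eqxx in hu | by rwall_p10 | by rewrite [X in _ = X]esym; rwall_p10].
    * case h3 : (e y u3).
      -- case h4 : (e y u4).
        ++ move=> _; right; exists u4; first by rewrite !inE eqxx ?orbT.
          move=> u; rewrite !inE => /orP [/orP [/orP [/orP [/eqP -> | /eqP ->] | /eqP ->] | /eqP ->] | /eqP ->] hu; first [by rewrite eqxx in hu | by rwall_p10 | by rewrite [X in _ = X]esym; rwall_p10].
        ++ move=> _; right; exists u4; first by rewrite !inE eqxx ?orbT.
          move=> u; rewrite !inE => /orP [/orP [/orP [/orP [/eqP -> | /eqP ->] | /eqP ->] | /eqP ->] | /eqP ->] hu; first [by rewrite eqxx in hu | by rwall_p10 | by rewrite [X in _ = X]esym; rwall_p10].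
      -- case h4 : (e y u4).
        ++ by rewrite /allowedC /=.
        ++ by rewrite /allowedC /=.
- case h1 : (e y u1).
  + case h2 : (e y u2).
    * case h3 : (e y u3).
      -- case h4 : (e y u4).
        ++ by rewrite /allowedC /=.
        ++ move=> _; right; exists u2; first by rewrite !inE eqxx ?orbT.
          move=> u; rewrite !inE => /orP [/orP [/orP [/orP [/eqP -> | /eqP ->] | /eqP ->] | /eqP ->] | /eqP ->] hu; first [by rewrite eqxx in hu | by rwall_p10 | by rewrite [X in _ = X]esym; rwall_p10].
      -- case h4 : (e y u4).
        ++ by rewrite /allowedC /=.
        ++ by rewrite /allowedC /=.
    * case h3 : (e y u3).
      -- case h4 : (e y u4).
        ++ by rewrite /allowedC /=.
        ++ move=> _; right; exists u2; first by rewrite !inE eqxx ?orbT.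
          move=> u; rewrite !inE => /orP [/orP [/orP [/orP [/eqP -> | /eqP ->] | /eqP ->] | /eqP ->] | /eqP ->] hu; first [by rewrite eqxx in hu | by rwall_p10 | by rewrite [X in _ = X]esym; rwall_p10].
      -- case h4 : (e y u4).
        ++ move=> _; right; exists u0; first by rewrite !inE eqxx ?orbT.
          move=> u; rewrite !inE => /orP [/orP [/orP [/orP [/eqP -> | /eqP ->] | /eqP ->] | /eqP ->] | /eqP ->] hu; first [by rewrite eqxx in hu | by rwall_p10 | by rewrite [X in _ = X]esym; rwall_p10].
        ++ by rewrite /allowedC /=.
  + case h2 : (e y u2).
    * case h3 : (e y u3).
      -- case h4 : (e y u4).
        ++ move=> _; right; exists u3; first by rewrite !inE eqxx ?orbT.
          move=> u; rewrite !inE => /orP [/orP [/orP [/orP [/eqP -> | /eqP ->] | /eqP ->] | /eqP ->] | /eqP ->] hu; first [by rewrite eqxx in hu | by rwall_p10 | by rewrite [X in _ = X]esym; rwall_p10].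
        ++ by rewrite /allowedC /=.
      -- case h4 : (e y u4).
        ++ move=> _; right; exists u3; first by rewrite !inE eqxx ?orbT.
          move=> u; rewrite !inE => /orP [/orP [/orP [/orP [/eqP -> | /eqP ->] | /eqP ->] | /eqP ->] | /eqP ->] hu; first [by rewrite eqxx in hu | by rwall_p10 | by rewrite [X in _ = X]esym; rwall_p10].
        ++ by rewrite /allowedC /=.
    * case h3 : (e y u3).
      -- case h4 : (e y u4).
        ++ by rewrite /allowedC /=.
        ++ by rewrite /allowedC /=.
      -- case h4 : (e y u4).
        ++ by rewrite /allowedC /=.
        ++ move=> _; left; apply/negP => /andP [/exists_inP [u uH hu] _]; move: uH hu; rewrite !inE => /orP [/orP [/orP [/orP [/eqP -> | /eqP ->] | /eqP ->] | /eqP ->] | /eqP ->]; by rewrite ?h0 ?h1 ?h2 ?h3 ?h4.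
Qed.

Lemma C5rot x w : clone e Hc x u0 -> ~ clone e Hc w u0 -> e w x != e w u0 -> False.
Proof.
move=> cx ncw wx.
have d1 : u1 != u0 by apply: contraTneq c01 => ->; rewrite eirr.
have d2 : u2 != u0 by apply: contraTneq c23 => ->; rewrite (negbTE n03).
have d3 : u3 != u0 by apply: contraTneq c23 => ->; rewrite esym (negbTE n02).
have d4 : u4 != u0 by apply: contraTneq c40 => ->; rewrite eirr.
have m1 : u1 \in Hc by rewrite !inE eqxx ?orbT.
have m2 : u2 \in Hc by rewrite !inE eqxx ?orbT.
have m3 : u3 \in Hc by rewrite !inE eqxx ?orbT.
have m4 : u4 \in Hc by rewrite !inE eqxx ?orbT.
have x1 : e x u1 by rewrite cx.
have x4 : e x u4 by rewrite cx // esym.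
have x2 : ~~ e x u2 by rewrite cx.
have x3 : ~~ e x u3 by rewrite cx.
apply: (C5C esym eirr noP5 noH noB c01 c12 c23 c34 c40 n02 n03 n13 n14 n24 x1 x4 x2 x3).
- exact: (C5A esym eirr noP5 noH noB c01 c12 c23 c34 c40 n02 n03 n13 n14 n24 w).
- apply/negP => /and4P [w1 w2 w3 w4]; apply: ncw => u.
  rewrite !inE => /orP [/orP [/orP [/orP [/eqP -> | /eqP ->] | /eqP ->] | /eqP ->] | /eqP ->] hu;
    first [by rewrite eqxx in hu | by rwall_p10 | by rewrite [X in _ = X]esym; rwall_p10].
- by rewrite esym; move: wx; case: (e w x); case: (e w u0).
Qed.
End Cyc.

Lemma HcC a b c d f : Hc a b c d f = Hc b c d f a.
Proof.
apply/setP => z; rewrite !inE.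
by case: (z == a); case: (z == b); case: (z == c); case: (z == d); case: (z == f).
Qed.

Lemma C5iso : has_induced C5 e -> isomorphic e C5.
Proof.
move=> [f [fi fa]].
pose u (i : nat) := f (inord i).
have E : forall i j, i < 5 -> j < 5 -> e (u i) (u j) = C5 (inord i) (inord j).
  by move=> i j hi hj; rewrite fa.
have c01 : e (u 0) (u 1) by rewrite E // /C5 /P5 /= !inordK.
have c12 : e (u 1) (u 2) by rewrite E // /C5 /P5 /= !inordK.
have c23 : e (u 2) (u 3) by rewrite E // /C5 /P5 /= !inordK.
have c34 : e (u 3) (u 4) by rewrite E // /C5 /P5 /= !inordK.
have c40 : e (u 4) (u 0) by rewrite E // /C5 /P5 /= !inordK.
have n02 : ~~ e (u 0) (u 2) by rewrite E // /C5 /P5 /= !inordK.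
have n03 : ~~ e (u 0) (u 3) by rewrite E // /C5 /P5 /= !inordK.
have n13 : ~~ e (u 1) (u 3) by rewrite E // /C5 /P5 /= !inordK.
have n14 : ~~ e (u 1) (u 4) by rewrite E // /C5 /P5 /= !inordK.
have n24 : ~~ e (u 2) (u 4) by rewrite E // /C5 /P5 /= !inordK.
have n20 : ~~ e (u 2) (u 0) by rewrite esym.
have n30 : ~~ e (u 3) (u 0) by rewrite esym.
have n31 : ~~ e (u 3) (u 1) by rewrite esym.
have n41 : ~~ e (u 4) (u 1) by rewrite esym.
have n42 : ~~ e (u 4) (u 2) by rewrite esym.
have cov : forall t, t \in Hc (u 0) (u 1) (u 2) (u 3) (u 4).
  move=> t; apply/negPn/negP => tH.
  have d1 : u 0 != u 1 by apply: contraTneq c01 => ->; rewrite eirr.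
  have H2 : 1 < #|Hc (u 0) (u 1) (u 2) (u 3) (u 4)|.
    apply: (@leq_trans #|[set u 0; u 1]|); first by rewrite cards2 d1.
    by apply: subset_leq_card; apply/subsetP => z; rewrite in_set2 !inE => /orP [->|->]; rewrite ?orbT.
  have [h [x [w [hH [xH [wH [cx [ncw wx]]]]]]]] :=
    absL esym prime H2 (ex_intro _ t tH) (fun y _ => C5cls c01 c12 c23 c34 c40 n02 n03 n13 n14 n24 y).
  move: cx ncw wx; move: hH; rewrite !inE => /orP [/orP [/orP [/orP [/eqP -> | /eqP ->] | /eqP ->] | /eqP ->] | /eqP ->] cx ncw wx.
  + exact: (C5rot c01 c12 c23 c34 c40 n02 n03 n13 n14 n24 cx ncw wx).
  + rewrite HcC in cx ncw.
    exact: (C5rot c12 c23 c34 c40 c01 n13 n14 n24 n20 n30 cx ncw wx).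
  + rewrite HcC in cx ncw; rewrite HcC in cx ncw.
    exact: (C5rot c23 c34 c40 c01 c12 n24 n20 n30 n31 n41 cx ncw wx).
  + rewrite HcC in cx ncw; rewrite HcC in cx ncw; rewrite HcC in cx ncw.
    exact: (C5rot c34 c40 c01 c12 c23 n30 n31 n41 n42 n02 cx ncw wx).
  + rewrite HcC in cx ncw; rewrite HcC in cx ncw; rewrite HcC in cx ncw; rewrite HcC in cx ncw.
    exact: (C5rot c40 c01 c12 c23 c34 n41 n42 n02 n03 n13 cx ncw wx).
have fbij : bijective f.
  apply: (inj_card_bij fi); rewrite -(card_codom fi).
  apply/subset_leq_card/subsetP => t _; apply/codomP.
  by move: (cov t); rewrite !inE => /orP [/orP [/orP [/orP [/eqP -> | /eqP ->] | /eqP ->] | /eqP ->] | /eqP ->];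
    eexists.
case: fbij => g fg gf.
exists g; split; first by exists f.
by move=> x y; rewrite -fa !gf.
Qed.
End C5main.

Lemma maxP (P : nat -> Prop) N k0 : P k0 -> (forall k, P k -> k <= N) ->
  exists K, k0 <= K /\ P K /\ ~ P K.+1.
Proof.
move=> Pk0 bnd.
suff : forall n k, N - k = n -> k0 <= k -> P k -> exists K, k0 <= K /\ P K /\ ~ P K.+1.
  by move=> /(_ _ k0 erefl (leqnn k0) Pk0).
elim=> [|n IH] k hn hk Pk.
- exists k; split => //; split => // PS; have := bnd _ PS; have := bnd _ Pk; lia.
- case: (classic (P k.+1)) => PS; last by exists k.
  apply: (IH k.+1) => //; lia.
Qed.

Unset Implicit Arguments.
Theorem theorem4p4 (T : finType) (e : rel T) :
  symmetric e -> irreflexive e ->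
  ~ has_induced P5 e -> ~ has_induced (compl P5) e -> ~ has_induced bull e ->
  [\/ #|T| <= 2,
      isomorphic e C5,
      has_homogeneous_set e
    | is_half_graph e \/ is_half_graph (compl e)].
Proof.
move=> esym eirr nP nH nB.
case: (leqP #|T| 2) => T2; first by constructor 1.
case: (boolP [exists X : {set T}, homogeneous e X]) => [/existsP [X hX]|nohom].
  by constructor 3; exists X.
have prime : ~ has_homogeneous_set e.
  by move=> [X hX]; move/negP: nohom; apply; apply/existsP; exists X.
case: (classic (has_induced C5 e)) => [hc|nC].
  by constructor 2; exact: (C5iso esym eirr nP nH nB prime hc).
constructor 4.
have [a [b [c [d [h1 h2 h3 [h4 h5 h6]]]]]] := prime_P4 esym prime T2.
pose Pk k := (exists A C, emb e k A C) \/ (exists A C, emb (compl e) k A C).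
have P2 : Pk 2.
  left; exists (fun i => if i == 1 then d else b), (fun i => if i == 1 then c else a).
  split; move=> [|[|[|i]]] [|[|[|j]]] //= _ _; rewrite ?eirr //;
    first [ done | (apply: negbTE; done) | (rewrite esym; done) | (rewrite esym; apply: negbTE; done) ].
have bnd : forall k, Pk k -> k <= #|T|.
  move=> k hP; case: (leqP k 1) => k1; first lia.
  case: hP => -[A [C hE]].
  - have := emb_card k1 hE; lia.
  - have := emb_card k1 hE; lia.
have [K [K2 [PK nPK]]] := maxP P2 bnd.
case: PK => -[A [C hE]].
- have nmax : ~ (exists A' C', emb e K.+1 A' C') by move=> h; apply: nPK; left.
  have nco : ~ (K = 2 /\ exists A' C', embc e 3 A' C').
    move=> [K2' [A' [C' h]]]; apply: nPK; right; exists A', C'; rewrite K2'.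
    by have := embc_emb esym h.
  have cov := core esym eirr nP nH nB nC prime K2 hE nmax nco.
  left; exists K; split; first lia.
  by have := iso_half esym K2 hE cov.
- have esym' := compl_sym esym.
  have eirr' := compl_irr e.
  have nmax : ~ (exists A' C', emb (compl e) K.+1 A' C') by move=> h; apply: nPK; right.
  have nco : ~ (K = 2 /\ exists A' C', embc (compl e) 3 A' C').
    move=> [K2' [A' [C' h]]]; apply: nPK; left; exists A', C'; rewrite K2'.
    apply: emb_ext (embc_emb esym' h) => u v; exact: compl_compl.
  have cov := core esym' eirr' (noP5c eirr nH) (noHc eirr nP) (noBc eirr nB) (noCc eirr nC)
     (prime_compl prime) K2 hE nmax nco.
  right; exists K; split; first lia.
  by have := iso_half esym' K2 hE cov.
Qed.
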